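(* Let $n\geqslant0$ be an integer and $f\colon[a,b]\to\mathbb{R}$ be such that $f,f',\dots,f^{(n)}$ are continuous on $[a,b]$ and $LD_{n+1}f$ exists almost everywhere on $[a,b]$. If $LD_{n+1}f$ is Laplace integrable on $[a,b]$ with \[f^{(n)}(x)-f^{(n)}(a)=\int_a^xLD_{n+1}f\quad\text{for all }x\in[a,b],\] then for all $x\in[a,b]$, \[f(x)=\sum_{k=0}^n\frac{f^{(k)}(a)}{k!}(x-a)^k+R_{n,a}(x),\qquad R_{n,a}(x)=\frac{1}{n!}\int_a^xLD_{n+1}f(t)(x-t)^n\,dt,\] where the last integral is a Laplace integral, and moreover \[\sup_{x\in[a,b]}|R_{n,a}(x)|\leqslant\frac{(b-a)^n}{n!}\|LD_{n+1}f\|_{[a,b]}.\]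
   Context: For $f$ with $f,\dots,f^{(n)}$ continuous near $x$, $LD_{n+1}f(x)$ denotes the $(n+1)$-th order Laplace derivative: the common value, when both limits exist and are equal, of $\lim_{s\to\infty}s^{n+2}\int_0^\delta e^{-st}\big[f(x+t)-\sum_{i=0}^n\frac{t^i}{i!}f^{(i)}(x)\big]dt$ and $\lim_{s\to\infty}(-1)^{n+1}s^{n+2}\int_0^\delta e^{-st}\big[f(x-t)-\sum_{i=0}^n\frac{(-t)^i}{i!}f^{(i)}(x)\big]dt$ for some $\delta>0$ (one-sided at endpoints); for $n=0$ this is $LD_1f$. Laplace integral on $[a,b]$: with lower/upper Laplace derivates $\underline{LD}_1F(x)$, $\overline{LD}_1F(x)$ being the minimum of the $\liminf$'s, resp. maximum of the $\limsup$'s, as $s\to\infty$ of $s^2\int_0^\delta e^{-st}[F(x+t)-F(x)]dt$ and $(-s^2)\int_0^\delta e^{-st}[F(x-t)-F(x)]dt$, a major function of $h$ is a continuous $U$ with $\underline{LD}_1U\geqslant h$, $\underline{LD}_1U>-\infty$ everywhere, a minor function a continuous $V$ with $\overline{LD}_1V\leqslant h$, $\overline{LD}_1V<\infty$ everywhere, and $h$ is Laplace integrable if $\sup_V(V(b)-V(a))=\inf_U(U(b)-U(a))$ is finite, the value being $\int_a^bh$ (values on null sets are irrelevant). Alexiewicz norm: $\|h\|_{[a,b]}=\sup_{x\in[a,b]}|\int_a^xh|$. *)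

(* Defs.v *)
From Stdlib Require Import Reals Lra Factorial.
From Coquelicot Require Import Coquelicot.
Open Scope R_scope.

Definition cont_on (g : R -> R) (a b : R) : Prop :=
  forall x, a <= x <= b -> forall eps, 0 < eps -> exists del, 0 < del /\
    forall y, a <= y <= b -> Rabs (y - x) < del -> Rabs (g y - g x) < eps.

Definition deriv_on (g g' : R -> R) (a b : R) : Prop :=
  forall x, a <= x <= b -> forall eps, 0 < eps -> exists del, 0 < del /\
    forall y, a <= y <= b -> 0 < Rabs (y - x) < del ->
      Rabs ((g y - g x) / (y - x) - g' x) < eps.

Definition null_set (N : R -> Prop) : Prop :=
  forall eps, 0 < eps -> exists c d : nat -> R,
    (forall k, c k <= d k) /\
    (forall x, N x -> exists k, c k <= x <= d k) /\
    (forall m, sum_f_R0 (fun k => d k - c k) m <= eps).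

(* D i = f^(i), i = 0..n *)
Definition taylor_poly (D : nat -> R -> R) (n : nat) (x t : R) : R :=
  sum_f_R0 (fun i => t ^ i / INR (fact i) * D i x) n.

Definition LD_right (D : nat -> R -> R) (n : nat) (x del s : R) : R :=
  s ^ (n + 2) * RInt (fun t => exp (- (s * t)) *
      (D 0%nat (x + t) - taylor_poly D n x t)) 0 del.

Definition LD_left (D : nat -> R -> R) (n : nat) (x del s : R) : R :=
  (-1) ^ (n + 1) * s ^ (n + 2) * RInt (fun t => exp (- (s * t)) *
      (D 0%nat (x - t) - taylor_poly D n x (- t))) 0 del.

(* LD_{n+1} f (x) = l, for f = D 0 on [a,b] with derivatives D i, one-sided
   at the endpoints *)
Definition is_LD (D : nat -> R -> R) (n : nat) (a b x l : R) : Prop :=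
  exists del, 0 < del /\
    (x < b -> x + del <= b /\ is_lim (LD_right D n x del) p_infty (Finite l)) /\
    (a < x -> a <= x - del /\ is_lim (LD_left D n x del) p_infty (Finite l)).

Definition LimInf_pinfty (g : R -> R) : Rbar :=
  Rbar_lub (fun y => exists M, y = Glb_Rbar (fun z => exists s, M <= s /\ z = g s)).
Definition LimSup_pinfty (g : R -> R) : Rbar :=
  Rbar_glb (fun y => exists M, y = Lub_Rbar (fun z => exists s, M <= s /\ z = g s)).

Definition LD1_right (F : R -> R) (x del s : R) : R :=
  s ^ 2 * RInt (fun t => exp (- (s * t)) * (F (x + t) - F x)) 0 del.
Definition LD1_left (F : R -> R) (x del s : R) : R :=
  - (s ^ 2) * RInt (fun t => exp (- (s * t)) * (F (x - t) - F x)) 0 del.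

(* lower derivate >= h x and > -oo (minimum over the available sides) *)
Definition lower_LD_ge (U : R -> R) (a b x c : R) : Prop :=
  (x < b -> exists del, 0 < del /\ x + del <= b /\
     Rbar_le (Finite c) (LimInf_pinfty (LD1_right U x del)) /\
     Rbar_lt m_infty (LimInf_pinfty (LD1_right U x del))) /\
  (a < x -> exists del, 0 < del /\ a <= x - del /\
     Rbar_le (Finite c) (LimInf_pinfty (LD1_left U x del)) /\
     Rbar_lt m_infty (LimInf_pinfty (LD1_left U x del))).

(* upper derivate <= h x and < +oo (maximum over the available sides) *)
Definition upper_LD_le (V : R -> R) (a b x c : R) : Prop :=
  (x < b -> exists del, 0 < del /\ x + del <= b /\
     Rbar_le (LimSup_pinfty (LD1_right V x del)) (Finite c) /\
     Rbar_lt (LimSup_pinfty (LD1_right V x del)) p_infty) /\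
  (a < x -> exists del, 0 < del /\ a <= x - del /\
     Rbar_le (LimSup_pinfty (LD1_left V x del)) (Finite c) /\
     Rbar_lt (LimSup_pinfty (LD1_left V x del)) p_infty).

Definition major_fun (U h : R -> R) (a b : R) : Prop :=
  cont_on U a b /\ forall x, a <= x <= b -> lower_LD_ge U a b x (h x).
Definition minor_fun (V h : R -> R) (a b : R) : Prop :=
  cont_on V a b /\ forall x, a <= x <= b -> upper_LD_le V a b x (h x).

Definition is_LaplaceInt (h : R -> R) (a b I : R) : Prop :=
  is_glb_Rbar (fun y => exists U, major_fun U h a b /\ y = U b - U a) (Finite I) /\
  is_lub_Rbar (fun y => exists V, minor_fun V h a b /\ y = V b - V a) (Finite I).

Definition Alex_norm (h : R -> R) (a b : R) : Rbar :=
  Lub_Rbar (fun y => exists x I, a <= x <= b /\ is_LaplaceInt h a x I /\ y = Rabs I).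

(* Main.v *)
Require Import Defs.
From Stdlib Require Import Reals Factorial.
From Coquelicot Require Import Coquelicot.
From Stdlib Require Import Lra Lia Classical FunctionalExtensionality.
Open Scope R_scope.


Lemma cR_mult (f g : R -> R) x : continuous f x -> continuous g x -> continuous (fun y => f y * g y) x.
Proof. intros; apply (continuous_mult f g x); auto. Qed.
Lemma cR_plus (f g : R -> R) x : continuous f x -> continuous g x -> continuous (fun y => f y + g y) x.
Proof. intros; apply (continuous_plus f g x); auto. Qed.
Lemma cR_minus (f g : R -> R) x : continuous f x -> continuous g x -> continuous (fun y => f y - g y) x.
Proof. intros; apply (continuous_minus f g x); auto. Qed.
Lemma cR_opp (f : R -> R) x : continuous f x -> continuous (fun y => - f y) x.
Proof. intros; apply (continuous_opp f x); auto. Qed.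
Lemma cR_const (c x : R) : continuous (fun _ : R => c) x.
Proof. apply continuous_const. Qed.
Lemma cR_id (x : R) : continuous (fun y : R => y) x.
Proof. apply continuous_id. Qed.
Lemma cR_comp (f g : R -> R) x : continuous f x -> continuous g (f x) -> continuous (fun y => g (f y)) x.
Proof. intros; apply (continuous_comp f g x); auto. Qed.
Lemma cR_exp (f : R -> R) x : continuous f x -> continuous (fun y => exp (f y)) x.
Proof. intros; apply continuous_exp_comp; auto. Qed.

Lemma cont_eps (U : R -> R) t : continuous U t ->
  forall eps, 0 < eps -> exists eta, 0 < eta /\ forall y, Rabs (y - t) < eta -> Rabs (U y - U t) < eps.
Proof.
  intros H eps He. apply continuity_pt_filterlim in H.
  destruct (H eps He) as [alp [Ha Hb]]. exists alp; split; auto.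
  intros y Hy. destruct (Req_dec y t) as [->|Hne].
  - rewrite Rminus_diag, Rabs_R0; lra.
  - apply Hb. split. split. exact I. auto. simpl; unfold R_dist; auto.
Qed.

Lemma eps_cont (U : R -> R) t :
  (forall eps, 0 < eps -> exists eta, 0 < eta /\ forall y, Rabs (y - t) < eta -> Rabs (U y - U t) < eps)
  -> continuous U t.
Proof.
  intros H. apply continuity_pt_filterlim. intros eps He.
  destruct (H eps He) as [eta [He1 He2]]. exists eta; split; auto.
  intros y [_ Hy]. simpl in *; unfold R_dist in *. apply He2; auto.
Qed.

Lemma bound_cont (w : R -> R) p q : p <= q -> (forall u, p <= u <= q -> continuous w u) ->
  exists B, forall u, p <= u <= q -> Rabs (w u) <= B.
Proof.
  intros Hpq Hc. destruct (continuity_ab_maj (fun u => Rabs (w u)) p q Hpq) as [M [HM _]].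
  - intros c Hc'. apply continuity_pt_filterlim. apply continuous_Rabs_comp. auto.
  - exists (Rabs (w M)). auto.
Qed.

Definition EvGe (g : R -> R) (c : R) := forall eps, 0 < eps -> exists M, forall s, M <= s -> c - eps <= g s.
Definition EvLe (g : R -> R) (c : R) := forall eps, 0 < eps -> exists M, forall s, M <= s -> g s <= c + eps.
Definition Van (g : R -> R) := forall eps, 0 < eps -> exists M, forall s, M <= s -> Rabs (g s) <= eps.

Lemma liminf_EvGe g c : Rbar_le (Finite c) (LimInf_pinfty g) -> EvGe g c.
Proof.
  unfold LimInf_pinfty, Rbar_lub. destruct (Rbar_ex_lub _) as [l [Hub Hl]]. simpl.
  intros Hc eps He. apply NNPP; intro Hn.
  assert (Hb : Rbar_is_upper_bound (fun y => exists M, y = Glb_Rbar (fun z => exists s, M <= s /\ z = g s)) (Finite (c - eps))).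
  { intros y [M ->]. assert (Hx : exists s, M <= s /\ g s < c - eps).
    { apply NNPP; intro H2. apply Hn. exists M. intros s Hs. apply Rnot_lt_le. intro H3. apply H2. exists s; auto. }
    destruct Hx as [s [Hs Hgs]].
    destruct (Glb_Rbar_correct (fun z => exists s, M <= s /\ z = g s)) as [Hlb _].
    apply Rbar_le_trans with (Finite (g s)). apply Hlb. exists s; auto. simpl; lra. }
  specialize (Hl _ Hb). destruct l; simpl in *; lra.
Qed.

Lemma EvGe_liminf g c : EvGe g c -> Rbar_le (Finite c) (LimInf_pinfty g) /\ Rbar_lt m_infty (LimInf_pinfty g).
Proof.
  unfold LimInf_pinfty, Rbar_lub. destruct (Rbar_ex_lub _) as [l [Hub Hl]]. simpl.
  intros H.
  assert (Hk : forall eps, 0 < eps -> Rbar_le (Finite (c - eps)) l).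
  { intros eps He. destruct (H eps He) as [M HM].
    apply Rbar_le_trans with (Glb_Rbar (fun z => exists s, M <= s /\ z = g s)).
    - destruct (Glb_Rbar_correct (fun z => exists s, M <= s /\ z = g s)) as [_ Hg].
      apply Hg. intros z [s [Hs ->]]. simpl. auto.
    - apply Hub. exists M; auto. }
  assert (Hc : Rbar_le (Finite c) l).
  { destruct l as [l| |]; simpl; auto.
    - apply Rnot_lt_le; intro Hlt. specialize (Hk ((c - l)/2) ltac:(lra)). simpl in Hk. lra.
    - specialize (Hk 1 Rlt_0_1). simpl in Hk. auto. }
  split; auto. destruct l; simpl in *; auto.
Qed.

Lemma limsup_EvLe g c : Rbar_le (LimSup_pinfty g) (Finite c) -> EvLe g c.
Proof.
  unfold LimSup_pinfty, Rbar_glb. destruct (Rbar_ex_glb _) as [l [Hlb Hl]]. simpl.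
  intros Hc eps He. apply NNPP; intro Hn.
  assert (Hb : Rbar_is_lower_bound (fun y => exists M, y = Lub_Rbar (fun z => exists s, M <= s /\ z = g s)) (Finite (c + eps))).
  { intros y [M ->]. assert (Hx : exists s, M <= s /\ c + eps < g s).
    { apply NNPP; intro H2. apply Hn. exists M. intros s Hs. apply Rnot_lt_le. intro H3. apply H2. exists s; auto. }
    destruct Hx as [s [Hs Hgs]].
    destruct (Lub_Rbar_correct (fun z => exists s, M <= s /\ z = g s)) as [Hub _].
    apply Rbar_le_trans with (Finite (g s)). simpl; lra. apply Hub. exists s; auto. }
  specialize (Hl _ Hb). destruct l; simpl in *; lra.
Qed.

Lemma EvLe_limsup g c : EvLe g c -> Rbar_le (LimSup_pinfty g) (Finite c) /\ Rbar_lt (LimSup_pinfty g) p_infty.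
Proof.
  unfold LimSup_pinfty, Rbar_glb. destruct (Rbar_ex_glb _) as [l [Hlb Hl]]. simpl.
  intros H.
  assert (Hk : forall eps, 0 < eps -> Rbar_le l (Finite (c + eps))).
  { intros eps He. destruct (H eps He) as [M HM].
    apply Rbar_le_trans with (Lub_Rbar (fun z => exists s, M <= s /\ z = g s)).
    - apply Hlb. exists M; auto.
    - destruct (Lub_Rbar_correct (fun z => exists s, M <= s /\ z = g s)) as [_ Hg].
      apply Hg. intros z [s [Hs ->]]. simpl. auto. }
  assert (Hc : Rbar_le l (Finite c)).
  { destruct l as [l| |]; simpl; auto.
    - apply Rnot_lt_le; intro Hlt. specialize (Hk ((l - c)/2) ltac:(lra)). simpl in Hk. lra.
    - specialize (Hk 1 Rlt_0_1). simpl in Hk. auto. }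
  split; auto. destruct l; simpl in *; auto.
Qed.

Definition Lap (w : R -> R) (del s : R) := s ^ 2 * RInt (fun u => exp (- (s * u)) * w u) 0 del.

Lemma exp_cube y : 0 <= y -> y ^ 3 / 27 <= exp y.
Proof.
  intros Hy. replace (exp y) with (exp (y/3) * exp (y/3) * exp (y/3)).
  2:{ rewrite <- !exp_plus. f_equal. field. }
  assert (H1 : y / 3 <= exp (y/3)).
  { destruct (Req_dec y 0) as [->|Hn]. unfold Rdiv; rewrite Rmult_0_l, exp_0; lra.
    assert (H := exp_ineq1 (y/3) ltac:(intro; apply Hn; lra)). lra. }
  assert (H0 : 0 <= y/3) by lra.
  assert (y/3 * (y/3) <= exp (y/3) * exp (y/3)) by (apply Rmult_le_compat; lra).
  assert (y/3*(y/3)*(y/3) <= exp (y/3) * exp (y/3) * exp(y/3)) by (apply Rmult_le_compat; nra).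
  replace (y^3/27) with (y/3*(y/3)*(y/3)) by field. auto.
Qed.

Lemma s2exp eta s : 0 < eta -> 0 < s -> s ^ 2 * exp (- (s * eta)) <= 27 / (eta ^ 3 * s).
Proof.
  intros He Hs. rewrite exp_Ropp.
  assert (H := exp_cube (s * eta) ltac:(nra)).
  assert (Hp : 0 < (s*eta)^3) by (apply pow_lt; nra).
  assert (Hq : 0 < exp (s*eta)) by apply exp_pos.
  apply Rle_trans with (s^2 * (27 / (s*eta)^3)).
  - apply Rmult_le_compat_l. nra. unfold Rdiv. rewrite <- (Rmult_1_l (/ exp _)).
    apply Rle_trans with (27 * / (s*eta)^3 * 1). 2: lra.
    replace (27 * / (s * eta) ^ 3 * 1) with (/ ((s*eta)^3/27)) by (field; nra).
    rewrite Rmult_1_l. apply Rinv_le_contravar; nra.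
  - right. field. nra.
Qed.

Lemma abs_RInt_bound (f G : R -> R) a b : a <= b -> ex_RInt f a b -> ex_RInt G a b ->
  (forall x, a < x < b -> Rabs (f x) <= G x) -> Rabs (RInt f a b) <= RInt G a b.
Proof.
  intros Hab Hf HG H. apply Rabs_le. split.
  - replace (- RInt G a b) with (RInt (fun x => - G x) a b).
    apply RInt_le; auto. apply (ex_RInt_opp G); auto.
    intros x Hx. specialize (H x Hx). apply Rabs_le_between in H. lra.
    rewrite (RInt_opp G); auto.
  - apply RInt_le; auto. intros x Hx. specialize (H x Hx). apply Rabs_le_between in H. lra.
Qed.

Lemma cont_expw (w : R -> R) s u : continuous w u -> continuous (fun u => exp (- (s * u)) * w u) u.
Proof.
  intros Hw. apply cR_mult; auto. apply cR_exp. apply cR_opp. apply cR_mult. apply cR_const. apply cR_id.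
Qed.

Lemma ex_RInt_cont (f : R -> R) a b : a <= b -> (forall u, a <= u <= b -> continuous f u) -> ex_RInt f a b.
Proof.
  intros Hab H. apply (ex_RInt_continuous (V:=R_CompleteNormedModule)). intros z Hz. apply H.
  rewrite Rmin_left, Rmax_right in Hz; auto.
Qed.

Lemma int_u_exp s del : 0 < s -> 0 <= del ->
  ex_RInt (fun u => u * exp (- (s * u))) 0 del /\ RInt (fun u => u * exp (- (s * u))) 0 del <= / s ^ 2.
Proof.
  intros Hs Hd.
  assert (Hc : forall u, continuous (fun u => u * exp (- (s * u))) u).
  { intros u. apply cR_mult. apply cR_id. apply cR_exp. apply cR_opp. apply cR_mult. apply cR_const. apply cR_id. }
  split. apply ex_RInt_cont; auto.
  assert (Hi : is_RInt (fun u => u * exp (- (s * u))) 0 del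
     (minus ((fun u => - (u / s + 1 / s ^ 2) * exp (- (s * u))) del) ((fun u => - (u / s + 1 / s ^ 2) * exp (- (s * u))) 0))).
  { apply (is_RInt_derive (V:=R_CompleteNormedModule) (fun u => - (u / s + 1 / s ^ 2) * exp (- (s * u)))). intros x _. auto_derive. auto. field. lra. intros; apply Hc. }
  rewrite (is_RInt_unique _ _ _ _ Hi). unfold minus, plus, opp; simpl.
  rewrite Rmult_0_r, Ropp_0, exp_0. unfold Rdiv. rewrite Rmult_0_l, Rplus_0_l.
  set (X := / (s * (s * 1))).
  assert (HX : 0 < X) by (unfold X; apply Rinv_0_lt_compat; nra).
  assert (0 <= (del * / s + 1 * X) * exp (- (s * del))).
  { apply Rmult_le_pos. apply Rplus_le_le_0_compat. apply Rmult_le_pos; auto. left; apply Rinv_0_lt_compat; auto.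
    lra. left; apply exp_pos. }
  lra.
Qed.

Lemma KL (w : R -> R) del : 0 < del -> (forall u, 0 <= u <= del -> continuous w u) ->
  (forall eps, 0 < eps -> exists eta, 0 < eta /\ forall u, 0 <= u <= eta -> u <= del -> Rabs (w u) <= eps * u) ->
  Van (Lap w del).
Proof.
  intros Hd Hc Ho eps He.
  destruct (bound_cont w 0 del) as [B HB]; auto. lra.
  assert (HB0 : 0 <= B) by (apply Rle_trans with (Rabs (w 0)); [apply Rabs_pos| apply HB; lra]).
  destruct (Ho (eps/2) ltac:(lra)) as [eta0 [Heta0 Hw]].
  set (eta := Rmin eta0 del).
  assert (Heta : 0 < eta) by (unfold eta; apply Rmin_glb_lt; lra).
  assert (Hetad : eta <= del) by (unfold eta; apply Rmin_r).
  assert (Hetae : eta <= eta0) by (unfold eta; apply Rmin_l).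
  set (K := 27 * B * del / eta ^ 3).
  assert (HK : 0 <= K).
  { unfold K. apply Rmult_le_pos. nra. left; apply Rinv_0_lt_compat, pow_lt; auto. }
  exists (Rmax 1 (2 * K / eps)). intros s Hs.
  assert (Hs1 : 1 <= s) by (apply Rle_trans with (Rmax 1 (2*K/eps)); [apply Rmax_l|auto]).
  assert (Hs2 : 2 * K / eps <= s) by (apply Rle_trans with (Rmax 1 (2*K/eps)); [apply Rmax_r|auto]).
  assert (Hs0 : 0 < s) by lra.
  destruct (int_u_exp s del Hs0 ltac:(lra)) as [Hex Hint].
  unfold Lap. rewrite Rabs_mult. rewrite (Rabs_right (s^2)) by (apply Rle_ge, pow_le; lra).
  assert (Hb : Rabs (RInt (fun u => exp (- (s * u)) * w u) 0 del) <=
      RInt (fun u => eps / 2 * (u * exp (- (s * u))) + B * exp (- (s * eta))) 0 del).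
  { apply abs_RInt_bound. lra.
    apply ex_RInt_cont. lra. intros u Hu. apply cont_expw. auto.
    apply (ex_RInt_plus (fun u => eps / 2 * (u * exp (- (s * u)))) (fun _ => B * exp (- (s * eta)))).
    apply (ex_RInt_scal (fun u => u * exp (- (s * u)))). auto. apply ex_RInt_const.
    intros u Hu. rewrite Rabs_mult, Rabs_right by (left; apply exp_pos).
    destruct (Rle_dec u eta).
    - assert (Hwu := Hw u ltac:(lra) ltac:(lra)).
      assert (0 <= B * exp (- (s * eta))) by (apply Rmult_le_pos; auto; left; apply exp_pos).
      assert (exp (- (s * u)) * Rabs (w u) <= exp (- (s * u)) * (eps/2*u)) by (apply Rmult_le_compat_l; [left; apply exp_pos|auto]).
      nra.
    - assert (Hwu := HB u ltac:(lra)).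
      assert (Hle : exp (- (s * u)) <= exp (- (s * eta))).
      { destruct (Req_dec u eta). subst; lra. left. apply exp_increasing. nra. }
      assert (0 <= u * exp (- (s * u))) by (apply Rmult_le_pos; [lra| left; apply exp_pos]).
      assert (exp (- (s * u)) * Rabs (w u) <= exp (- (s * eta)) * B).
      { apply Rmult_le_compat; auto. left; apply exp_pos. apply Rabs_pos. }
      nra. }
  rewrite (RInt_plus (fun u => eps / 2 * (u * exp (- (s * u)))) (fun _ => B * exp (- (s * eta)))) in Hb.
  2: apply (ex_RInt_scal (fun u => u * exp (- (s * u)))); auto.
  2: apply ex_RInt_const.
  rewrite (RInt_scal (fun u => u * exp (- (s * u)))) in Hb by auto.
  rewrite RInt_const in Hb. unfold plus, scal in Hb; simpl in Hb. unfold mult in Hb; simpl in Hb.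
  assert (Hse := s2exp eta s Heta Hs0).
  assert (Hpos : 0 < s^2) by (apply pow_lt; lra).
  apply Rle_trans with (s ^ 2 * (eps / 2 * RInt (fun u => u * exp (- (s * u))) 0 del + (del - 0) * (B * exp (- (s * eta))))).
  apply Rmult_le_compat_l; lra.
  assert (H1 : s^2 * (eps/2 * RInt (fun u => u * exp (- (s * u))) 0 del) <= eps/2).
  { apply Rle_trans with (s^2 * (eps/2 * / s^2)). apply Rmult_le_compat_l. lra. apply Rmult_le_compat_l; lra.
    right; field; lra. }
  assert (H2 : s^2 * ((del - 0) * (B * exp (- (s * eta)))) <= K / s).
  { replace (s^2 * ((del - 0) * (B * exp (- (s * eta))))) with ((del * B) * (s^2 * exp (- (s*eta)))) by ring.
    apply Rle_trans with ((del * B) * (27 / (eta^3 * s))). apply Rmult_le_compat_l. nra. auto.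
    right. unfold K. field. split; lra. }
  assert (H3 : K / s <= eps / 2).
  { apply Rle_trans with (K / (2 * K / eps)).
    destruct (Req_dec K 0) as [->|HK0]. unfold Rdiv; rewrite !Rmult_0_l; lra.
    unfold Rdiv. apply Rmult_le_compat_l; auto. apply Rinv_le_contravar; auto.
    apply Rmult_lt_0_compat. lra. apply Rinv_0_lt_compat; lra.
    destruct (Req_dec K 0) as [->|HK0]. unfold Rdiv; rewrite !Rmult_0_l; lra.
    right; field; lra. }
  lra.
Qed.

Lemma Lap_ext w1 w2 del s : 0 <= del -> (forall u, 0 < u < del -> w1 u = w2 u) -> Lap w1 del s = Lap w2 del s.
Proof.
  intros Hd H. unfold Lap. f_equal. apply RInt_ext. rewrite Rmin_left, Rmax_right by lra.
  intros u Hu. rewrite H; auto.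
Qed.

Lemma Lap_lin r w1 w2 del s : 0 <= del -> (forall u, 0 <= u <= del -> continuous w1 u) ->
  (forall u, 0 <= u <= del -> continuous w2 u) ->
  Lap (fun u => r * w1 u + w2 u) del s = r * Lap w1 del s + Lap w2 del s.
Proof.
  intros Hd H1 H2. unfold Lap.
  assert (E1 : ex_RInt (fun u => exp (- (s * u)) * w1 u) 0 del) by (apply ex_RInt_cont; auto; intros; apply cont_expw; auto).
  assert (E2 : ex_RInt (fun u => exp (- (s * u)) * w2 u) 0 del) by (apply ex_RInt_cont; auto; intros; apply cont_expw; auto).
  rewrite (RInt_ext _ (fun u => plus (scal r (exp (- (s * u)) * w1 u)) (exp (- (s * u)) * w2 u))).
  2:{ intros; unfold plus, scal; simpl; unfold mult; simpl; ring. }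
  rewrite (RInt_plus (V:=R_CompleteNormedModule) (fun u => scal r (exp (- (s * u)) * w1 u)) (fun u => exp (- (s * u)) * w2 u)).
  2: apply (ex_RInt_scal (V:=R_CompleteNormedModule) (fun u => exp (- (s * u)) * w1 u)); auto. 2: auto.
  rewrite (RInt_scal (V:=R_CompleteNormedModule) (fun u => exp (- (s * u)) * w1 u)) by auto. unfold plus, scal; simpl; unfold mult; simpl. ring.
Qed.

Lemma Lap_opp w del s : 0 <= del -> (forall u, 0 <= u <= del -> continuous w u) ->
  Lap (fun u => - w u) del s = - Lap w del s.
Proof.
  intros Hd H. idtac.  rewrite (Lap_ext _ (fun u => (-1) * w u + 0)) by (first [lra | intros; ring]).
  rewrite Lap_lin; [| lra | auto | intros; apply cR_const].
  unfold Lap at 2. rewrite (RInt_ext (V:=R_CompleteNormedModule) _ (fun _ => 0)).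
  rewrite RInt_const. unfold scal; simpl; unfold mult; simpl. ring. intros; apply Rmult_0_r.
Qed.

Lemma Van_K (Y : R -> R) K : 0 <= K -> (forall s, 1 <= s -> Rabs (Y s) <= K / s) -> Van Y.
Proof.
  intros HK H eps He. exists (Rmax 1 (K / eps)). intros s Hs.
  assert (Hs1 : 1 <= s) by (apply Rle_trans with (Rmax 1 (K/eps)); [apply Rmax_l|auto]).
  assert (Hs2 : K / eps <= s) by (apply Rle_trans with (Rmax 1 (K/eps)); [apply Rmax_r|auto]).
  apply Rle_trans with (K / s). apply H; auto.
  apply Rmult_le_reg_r with s. lra. unfold Rdiv. rewrite Rmult_assoc, Rinv_l, Rmult_1_r by lra.
  apply Rmult_le_reg_r with (/ eps). apply Rinv_0_lt_compat; lra.
  replace (eps * s * / eps) with s by (field; lra). auto.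
Qed.

Lemma Lap_shrink w del del' : 0 < del' <= del -> (forall u, 0 <= u <= del -> continuous w u) ->
  Van (fun s => Lap w del s - Lap w del' s).
Proof.
  intros Hd H. destruct (bound_cont w 0 del) as [B HB]; try lra; auto.
  assert (HB0 : 0 <= B) by (apply Rle_trans with (Rabs (w 0)); [apply Rabs_pos| apply HB; lra]).
  apply (Van_K _ ((del - del') * B * 27 / del' ^ 3)).
  { apply Rmult_le_pos. apply Rmult_le_pos. nra. lra. left; apply Rinv_0_lt_compat, pow_lt; lra. }
  intros s Hs. unfold Lap.
  assert (Ex : forall p q, 0 <= p <= q -> q <= del -> ex_RInt (fun u => exp (- (s * u)) * w u) p q).
  { intros p q Hp Hq. apply ex_RInt_cont. lra. intros; apply cont_expw; apply H; lra. }
  assert (Hc := RInt_Chasles (V:=R_CompleteNormedModule) (fun u => exp (- (s * u)) * w u) 0 del' del (Ex 0 del' ltac:(lra) ltac:(lra)) (Ex del' del ltac:(lra) ltac:(lra))).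
  unfold plus in Hc; simpl in Hc. rewrite <- Hc.
  replace (s ^ 2 * (RInt (fun u => exp (- (s * u)) * w u) 0 del' + RInt (fun u => exp (- (s * u)) * w u) del' del) -
    s ^ 2 * RInt (fun u => exp (- (s * u)) * w u) 0 del') with (s^2 * RInt (fun u => exp (- (s * u)) * w u) del' del) by ring.
  rewrite Rabs_mult, (Rabs_right (s^2)) by (apply Rle_ge, pow_le; lra).
  assert (Hi := abs_RInt_le_const (fun u => exp (- (s * u)) * w u) del' del (exp (- (s * del')) * B) ltac:(lra) (Ex del' del ltac:(lra) ltac:(lra))).
  assert (Hi' : Rabs (RInt (fun u => exp (- (s * u)) * w u) del' del) <= (del - del') * (exp (- (s * del')) * B)).
  { apply Hi. intros t Ht. rewrite Rabs_mult, Rabs_right by (left; apply exp_pos).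
    apply Rmult_le_compat. left; apply exp_pos. apply Rabs_pos.
    destruct (Req_dec t del'). subst; lra. left; apply exp_increasing. nra. apply HB; lra. }
  assert (Hse := s2exp del' s ltac:(lra) ltac:(lra)).
  apply Rle_trans with (s^2 * ((del - del') * (exp (- (s * del')) * B))).
  apply Rmult_le_compat_l; auto. apply pow_le; lra.
  replace (s ^ 2 * ((del - del') * (exp (- (s * del')) * B))) with (((del - del') * B) * (s^2 * exp (- (s * del')))) by ring.
  apply Rle_trans with (((del - del') * B) * (27 / (del' ^ 3 * s))).
  apply Rmult_le_compat_l; auto. nra.
  right. field. split; lra.
Qed.

Lemma EvGe_comb (X Y Z : R -> R) c r : EvGe X c -> 0 <= r -> Van Y -> (forall s, Z s = r * X s + Y s) -> EvGe Z (r * c).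
Proof.
  intros HX Hr HY HZ eps He.
  destruct (HX (eps / (2 * (r + 1))) ltac:(apply Rdiv_lt_0_compat; lra)) as [M1 H1].
  destruct (HY (eps/2) ltac:(lra)) as [M2 H2].
  exists (Rmax M1 M2). intros s Hs. rewrite HZ.
  assert (Hs1 : M1 <= s) by (apply Rle_trans with (Rmax M1 M2); [apply Rmax_l|auto]).
  assert (Hs2 : M2 <= s) by (apply Rle_trans with (Rmax M1 M2); [apply Rmax_r|auto]).
  specialize (H1 s Hs1). specialize (H2 s Hs2). apply Rabs_le_between in H2.
  assert (r * (c - eps / (2 * (r + 1))) <= r * X s) by (apply Rmult_le_compat_l; auto).
  assert (r * (eps / (2 * (r + 1))) <= eps / 2).
  { replace (r * (eps / (2 * (r + 1)))) with ((eps/2) * (r / (r+1))) by (field; lra).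
    assert (r / (r+1) <= 1). { apply Rmult_le_reg_r with (r+1). lra. unfold Rdiv. rewrite Rmult_assoc, Rinv_l; lra. }
    nra. }
  nra.
Qed.

Lemma EvGe_ext (X Y : R -> R) c : EvGe X c -> (forall s, X s = Y s) -> EvGe Y c.
Proof. intros H E eps He. destruct (H eps He) as [M HM]. exists M. intros s Hs. rewrite <- E. auto. Qed.

Lemma EvGe_le (X : R -> R) c c' : EvGe X c -> c' <= c -> EvGe X c'.
Proof. intros H E eps He. destruct (H eps He) as [M HM]. exists M. intros s Hs. specialize (HM s Hs). lra. Qed.

Definition LowR (U : R -> R) b x c := exists del, 0 < del /\ x + del <= b /\ EvGe (LD1_right U x del) c.
Definition LowL (U : R -> R) a x c := exists del, 0 < del /\ a <= x - del /\ EvGe (LD1_left U x del) c.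
Definition Major (U h : R -> R) a b := cont_on U a b /\
  forall x, a <= x <= b -> (x < b -> LowR U b x (h x)) /\ (a < x -> LowL U a x (h x)).

Lemma major_iff U h a b : major_fun U h a b <-> Major U h a b.
Proof.
  unfold major_fun, Major, lower_LD_ge, LowR, LowL. split; intros [Hc H]; split; auto; intros x Hx; destruct (H x Hx) as [H1 H2]; split.
  - intros Hb; destruct (H1 Hb) as [d [Hd [Hd2 [Hd3 _]]]]. exists d; repeat split; auto. apply liminf_EvGe; auto.
  - intros Hb; destruct (H2 Hb) as [d [Hd [Hd2 [Hd3 _]]]]. exists d; repeat split; auto. apply liminf_EvGe; auto.
  - intros Hb; destruct (H1 Hb) as [d [Hd [Hd2 Hd3]]]. exists d; split; [auto| split; [auto| apply EvGe_liminf; auto]].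
  - intros Hb; destruct (H2 Hb) as [d [Hd [Hd2 Hd3]]]. exists d; split; [auto| split; [auto| apply EvGe_liminf; auto]].
Qed.

Definition clamp a b t := Rmax a (Rmin b t).
Lemma clamp_in a b t : a <= b -> a <= clamp a b t <= b.
Proof. intros; unfold clamp, Rmax, Rmin; repeat destruct Rle_dec; lra. Qed.
Lemma clamp_id a b t : a <= t <= b -> clamp a b t = t.
Proof. intros; unfold clamp, Rmax, Rmin; repeat destruct Rle_dec; lra. Qed.
Lemma clamp_lip a b y t : a <= b -> Rabs (clamp a b y - clamp a b t) <= Rabs (y - t).
Proof. intros; unfold clamp, Rmax, Rmin; repeat destruct Rle_dec; unfold Rabs; repeat destruct Rcase_abs; lra. Qed.

Lemma cont_clamp U a b : a <= b -> cont_on U a b -> forall t, continuous (fun y => U (clamp a b y)) t.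
Proof.
  intros Hab Hc t. apply eps_cont. intros eps He.
  destruct (Hc (clamp a b t) (clamp_in a b t Hab) eps He) as [d [Hd Hd2]].
  exists d; split; auto. intros y Hy. apply Hd2. apply clamp_in; auto.
  eapply Rle_lt_trans. apply clamp_lip; auto. auto.
Qed.

Lemma cont_on_of (U : R -> R) a b : (forall t, a <= t <= b -> continuous U t) -> cont_on U a b.
Proof.
  intros H x Hx eps He. destruct (cont_eps U x (H x Hx) eps He) as [d [Hd Hd2]]. exists d; split; auto.
Qed.

Lemma LD1r_Lap U x del s : LD1_right U x del s = Lap (fun u => U (x + u) - U x) del s.
Proof. reflexivity. Qed.
Lemma LD1l_Lap U x del s : LD1_left U x del s = - Lap (fun u => U (x - u) - U x) del s.
Proof. unfold LD1_left, Lap. ring. Qed.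

Lemma LD1r_ext U V x del s : 0 < del -> (forall y, x <= y <= x + del -> U y = V y) -> LD1_right U x del s = LD1_right V x del s.
Proof. intros Hd H. rewrite !LD1r_Lap. apply Lap_ext. lra. intros u Hu. rewrite !H; lra. Qed.
Lemma LD1l_ext U V x del s : 0 < del -> (forall y, x - del <= y <= x -> U y = V y) -> LD1_left U x del s = LD1_left V x del s.
Proof. intros Hd H. rewrite !LD1l_Lap. f_equal. apply Lap_ext. lra. intros u Hu. rewrite !H; lra. Qed.

Lemma major_clamp U h a b : a <= b -> major_fun U h a b -> major_fun (fun y => U (clamp a b y)) h a b.
Proof.
  intros Hab H. apply major_iff in H. apply major_iff. destruct H as [Hc H]. split.
  - apply cont_on_of. intros; apply cont_clamp; auto.
  - intros x Hx. destruct (H x Hx) as [H1 H2]. split.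
    + intros Hb. destruct (H1 Hb) as [d [Hd [Hd2 Hd3]]]. exists d; repeat split; auto.
      apply (EvGe_ext _ _ _ Hd3). intros s. apply LD1r_ext; auto. intros y Hy. rewrite clamp_id; lra.
    + intros Hb. destruct (H2 Hb) as [d [Hd [Hd2 Hd3]]]. exists d; repeat split; auto.
      apply (EvGe_ext _ _ _ Hd3). intros s. apply LD1l_ext; auto. intros y Hy. rewrite clamp_id; lra.
Qed.

Lemma major_shift U h a b k : major_fun U h a b -> major_fun (fun y => U y + k) h a b.
Proof.
  intros H. apply major_iff in H. apply major_iff. destruct H as [Hc H]. split.
  - intros x Hx eps He. destruct (Hc x Hx eps He) as [d [Hd Hd2]]. exists d; split; auto.
    intros y Hy Hy2. replace (U y + k - (U x + k)) with (U y - U x) by ring. auto.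
  - intros x Hx. destruct (H x Hx) as [H1 H2]. split.
    + intros Hb. destruct (H1 Hb) as [d [Hd [Hd2 Hd3]]]. exists d; repeat split; auto.
      apply (EvGe_ext _ _ _ Hd3). intros s. rewrite !LD1r_Lap. apply Lap_ext. lra. intros; ring.
    + intros Hb. destruct (H2 Hb) as [d [Hd [Hd2 Hd3]]]. exists d; repeat split; auto.
      apply (EvGe_ext _ _ _ Hd3). intros s. rewrite !LD1l_Lap. f_equal. apply Lap_ext. lra. intros; ring.
Qed.

Lemma major_ext U h1 h2 a b : (forall x, a <= x <= b -> h1 x = h2 x) -> major_fun U h1 a b -> major_fun U h2 a b.
Proof.
  intros E H. apply major_iff in H. apply major_iff. destruct H as [Hc H]. split; auto.
  intros x Hx. rewrite <- (E x Hx). auto.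
Qed.

Lemma Van_opp Y : Van Y -> Van (fun s => - Y s).
Proof. intros H eps He. destruct (H eps He) as [M HM]. exists M. intros. rewrite Rabs_Ropp. auto. Qed.

Lemma major_restrict U h a b a' b' : (forall t, continuous U t) -> major_fun U h a b -> a <= a' -> a' <= b' -> b' <= b ->
  major_fun U h a' b'.
Proof.
  intros HU H Ha Hab Hb. apply major_iff in H. apply major_iff. destruct H as [Hc H]. split.
  - apply cont_on_of. auto.
  - intros x Hx. destruct (H x ltac:(lra)) as [H1 H2]. split.
    + intros Hxb. destruct (H1 ltac:(lra)) as [d [Hd [Hd2 Hd3]]].
      set (d' := Rmin d (b' - x)).
      assert (Hd' : 0 < d' <= d) by (unfold d'; split; [apply Rmin_glb_lt; lra | apply Rmin_l]).
      exists d'; repeat split; try lra. unfold d'; assert (Rmin d (b' - x) <= b' - x) by apply Rmin_r; lra.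
      replace (h x) with (1 * h x) by ring.
      apply (EvGe_comb _ (fun s => - (Lap (fun u => U (x + u) - U x) d s - Lap (fun u => U (x + u) - U x) d' s)) _ _ _ Hd3).
      lra. apply Van_opp. apply Lap_shrink. auto. intros; apply cR_minus; [apply (cR_comp (fun u => x + u)); [apply cR_plus; [apply cR_const|apply cR_id]|apply HU] | apply cR_const].
      intros s. rewrite !LD1r_Lap. ring.
    + intros Hxa. destruct (H2 ltac:(lra)) as [d [Hd [Hd2 Hd3]]].
      set (d' := Rmin d (x - a')).
      assert (Hd' : 0 < d' <= d) by (unfold d'; split; [apply Rmin_glb_lt; lra | apply Rmin_l]).
      exists d'; repeat split; try lra. unfold d'; assert (Rmin d (x - a') <= x - a') by apply Rmin_r; lra.
      replace (h x) with (1 * h x) by ring.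
      apply (EvGe_comb _ (fun s => (Lap (fun u => U (x - u) - U x) d s - Lap (fun u => U (x - u) - U x) d' s)) _ _ _ Hd3).
      lra. apply Lap_shrink. auto. intros; apply cR_minus; [apply (cR_comp (fun u => x - u)); [apply cR_minus; [apply cR_const|apply cR_id]|apply HU] | apply cR_const].
      intros s. rewrite !LD1l_Lap. ring.
Qed.

Lemma major_glue U1 U2 h a t c : a <= t <= c -> major_fun U1 h a t -> major_fun U2 h t c -> U1 t = U2 t ->
  major_fun (fun y => if Rle_dec y t then U1 y else U2 y) h a c.
Proof.
  intros Ht H1 H2 E. apply major_iff in H1. apply major_iff in H2. apply major_iff.
  destruct H1 as [C1 H1]. destruct H2 as [C2 H2]. set (G := fun y => if Rle_dec y t then U1 y else U2 y).
  assert (G1 : forall y, y <= t -> G y = U1 y) by (intros y Hy; unfold G; destruct Rle_dec; lra).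
  assert (G2 : forall y, t <= y -> G y = U2 y) by (intros y Hy; unfold G; destruct Rle_dec; [assert (y = t) by lra; subst; auto | auto]).
  split.
  - intros x Hx eps He.
    destruct (Rle_dec x t) as [Hxt|Hxt].
    + destruct (C1 x ltac:(lra) eps He) as [d1 [Hd1 Hd1']].
      destruct (Req_dec x t) as [Ex|Ex].
      * subst x. destruct (C2 t ltac:(lra) eps He) as [d2 [Hd2 Hd2']].
        exists (Rmin d1 d2); split. apply Rmin_glb_lt; lra.
        intros y Hy Hyd. assert (Rmin d1 d2 <= d1) by apply Rmin_l. assert (Rmin d1 d2 <= d2) by apply Rmin_r.
        destruct (Rle_dec y t). rewrite !G1 by lra. apply Hd1'; lra. rewrite G2, (G1 t), E by lra. apply Hd2'; lra.
      * exists (Rmin d1 (t - x)); split. apply Rmin_glb_lt; lra.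
        intros y Hy Hyd. assert (Rmin d1 (t - x) <= d1) by apply Rmin_l. assert (Rmin d1 (t-x) <= t - x) by apply Rmin_r.
        assert (y <= t) by (apply Rabs_def2 in Hyd; lra).
        rewrite !G1 by lra. apply Hd1'; lra.
    + destruct (C2 x ltac:(lra) eps He) as [d2 [Hd2 Hd2']].
      exists (Rmin d2 (x - t)); split. apply Rmin_glb_lt; lra.
      intros y Hy Hyd. assert (Rmin d2 (x - t) <= d2) by apply Rmin_l. assert (Rmin d2 (x-t) <= x - t) by apply Rmin_r.
      assert (t <= y) by (apply Rabs_def2 in Hyd; lra).
      rewrite !G2 by lra. apply Hd2'; lra.
  - intros x Hx. split.
    + intros Hxc. destruct (Rlt_le_dec x t) as [Hxt|Hxt].
      * destruct (proj1 (H1 x ltac:(lra)) Hxt) as [d [Hd [Hd2 Hd3]]]. exists d; repeat split; auto. lra.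
        apply (EvGe_ext _ _ _ Hd3). intros s. apply LD1r_ext; auto. intros y Hy. rewrite G1; lra.
      * destruct (proj1 (H2 x ltac:(lra)) Hxc) as [d [Hd [Hd2 Hd3]]]. exists d; repeat split; auto.
        apply (EvGe_ext _ _ _ Hd3). intros s. apply LD1r_ext; auto. intros y Hy.
        destruct (Req_dec y t). subst y. rewrite G1, E; lra. rewrite G2; lra.
    + intros Hxa. destruct (Rle_lt_dec x t) as [Hxt|Hxt].
      * destruct (proj2 (H1 x ltac:(lra)) Hxa) as [d [Hd [Hd2 Hd3]]]. exists d; repeat split; auto.
        apply (EvGe_ext _ _ _ Hd3). intros s. apply LD1l_ext; auto. intros y Hy. rewrite G1; lra.
      * destruct (proj2 (H2 x ltac:(lra)) Hxt) as [d [Hd [Hd2 Hd3]]]. exists d; repeat split; auto. lra.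
        apply (EvGe_ext _ _ _ Hd3). intros s. apply LD1l_ext; auto. intros y Hy.
        destruct (Req_dec y t). subst y. rewrite G1, E; lra. rewrite G2; lra.
Qed.

Lemma cont_on_opp V a b : cont_on V a b -> cont_on (fun t => - V t) a b.
Proof.
  intros H x Hx eps He. destruct (H x Hx eps He) as [d [Hd Hd2]]. exists d; split; auto.
  intros y Hy Hy2. replace (- V y - - V x) with (- (V y - V x)) by ring. rewrite Rabs_Ropp. auto.
Qed.

Lemma LD1r_opp V a b x del s : a <= x -> 0 < del -> x + del <= b -> cont_on V a b ->
  LD1_right (fun t => - V t) x del s = - LD1_right V x del s.
Proof.
  intros Hx Hd Hb Hc. assert (Hab : a <= b) by lra.
  rewrite (LD1r_ext (fun t => - V t) (fun t => - V (clamp a b t))) by (auto; intros; rewrite clamp_id; lra).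
  rewrite (LD1r_ext V (fun t => V (clamp a b t))) by (auto; intros; rewrite clamp_id; lra).
  rewrite !LD1r_Lap. rewrite <- Lap_opp. apply Lap_ext. lra. intros; ring. lra.
  intros; apply cR_minus. apply (cR_comp (fun u => x + u) (fun y => V (clamp a b y))). apply cR_plus; [apply cR_const|apply cR_id]. apply cont_clamp; auto. apply cR_const.
Qed.

Lemma LD1l_opp V a b x del s : x <= b -> 0 < del -> a <= x - del -> cont_on V a b ->
  LD1_left (fun t => - V t) x del s = - LD1_left V x del s.
Proof.
  intros Hx Hd Hb Hc. assert (Hab : a <= b) by lra.
  rewrite (LD1l_ext (fun t => - V t) (fun t => - V (clamp a b t))) by (auto; intros; rewrite clamp_id; lra).
  rewrite (LD1l_ext V (fun t => V (clamp a b t))) by (auto; intros; rewrite clamp_id; lra).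
  rewrite !LD1l_Lap. f_equal. rewrite <- Lap_opp. apply Lap_ext. lra. intros; ring. lra.
  intros; apply cR_minus. apply (cR_comp (fun u => x - u) (fun y => V (clamp a b y))). apply cR_minus; [apply cR_const|apply cR_id]. apply cont_clamp; auto. apply cR_const.
Qed.

Lemma EvLe_EvGe g c : EvLe g c <-> EvGe (fun s => - g s) (- c).
Proof.
  split; intros H eps He; destruct (H eps He) as [M HM]; exists M; intros s Hs; specialize (HM s Hs); lra.
Qed.

Lemma minor_neg V h a b : minor_fun V h a b <-> major_fun (fun t => - V t) (fun t => - h t) a b.
Proof.
  rewrite major_iff. unfold minor_fun, Major, upper_LD_le, LowR, LowL. split.
  - intros [Hc H]. split. apply cont_on_opp; auto. intros x Hx; destruct (H x Hx) as [H1 H2]; split.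
    + intros Hb; destruct (H1 Hb) as [d [Hd [Hd2 [Hd3 _]]]]. exists d; repeat split; auto.
      apply limsup_EvLe, EvLe_EvGe in Hd3. apply (EvGe_ext _ _ _ Hd3). intros s.
      rewrite (LD1r_opp V a b); auto; lra.
    + intros Hb; destruct (H2 Hb) as [d [Hd [Hd2 [Hd3 _]]]]. exists d; repeat split; auto.
      apply limsup_EvLe, EvLe_EvGe in Hd3. apply (EvGe_ext _ _ _ Hd3). intros s.
      rewrite (LD1l_opp V a b); auto; lra.
  - intros [Hc H]. assert (Hc' : cont_on V a b).
    { apply cont_on_opp in Hc. intros x Hx eps He. destruct (Hc x Hx eps He) as [d [Hd Hd2]]. exists d; split; auto.
      intros y Hy Hy2. specialize (Hd2 y Hy Hy2). rewrite !Ropp_involutive in Hd2. auto. }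
    split; auto. intros x Hx; destruct (H x Hx) as [H1 H2]; split.
    + intros Hb; destruct (H1 Hb) as [d [Hd [Hd2 Hd3]]]. exists d; split; [auto|split;[auto|]].
      apply EvLe_limsup. apply EvLe_EvGe. replace (- h x) with (- h x) in Hd3 by ring.
      apply (EvGe_ext _ _ _ Hd3). intros s. rewrite (LD1r_opp V a b); auto; lra.
    + intros Hb; destruct (H2 Hb) as [d [Hd [Hd2 Hd3]]]. exists d; split; [auto|split;[auto|]].
      apply EvLe_limsup. apply EvLe_EvGe.
      apply (EvGe_ext _ _ _ Hd3). intros s. rewrite (LD1l_opp V a b); auto; lra.
Qed.

Definition Low (h : R -> R) a b I := (forall U, major_fun U h a b -> I <= U b - U a) /\
  (forall eps, 0 < eps -> exists U, major_fun U h a b /\ U b - U a <= I + eps).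
Definition High (h : R -> R) a b I := (forall V, minor_fun V h a b -> V b - V a <= I) /\
  (forall eps, 0 < eps -> exists V, minor_fun V h a b /\ I - eps <= V b - V a).

Lemma glb_Low h a b I : is_glb_Rbar (fun y => exists U, major_fun U h a b /\ y = U b - U a) (Finite I) <-> Low h a b I.
Proof.
  split.
  - intros [Hlb Hg]. split.
    + intros U HU. apply (Hlb (U b - U a)). exists U; auto.
    + intros eps He. apply NNPP; intro Hn.
      assert (Hb : is_lb_Rbar (fun y => exists U, major_fun U h a b /\ y = U b - U a) (Finite (I + eps))).
      { intros y [U [HU ->]]. simpl. apply Rnot_lt_le; intro Hl. apply Hn. exists U; split; auto; lra. }
      specialize (Hg _ Hb). simpl in Hg. lra.
  - intros [H1 H2]. split.
    + intros y [U [HU ->]]. simpl. auto.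
    + intros l Hl. destruct l as [l| |]; simpl; auto.
      * apply Rnot_lt_le; intro Hlt. destruct (H2 ((l - I)/2) ltac:(lra)) as [U [HU HU2]].
        specialize (Hl (U b - U a) (ex_intro _ U (conj HU eq_refl))). simpl in Hl. lra.
      * destruct (H2 1 Rlt_0_1) as [U [HU _]]. apply (Hl (U b - U a)). exists U; auto.
Qed.

Lemma lub_High h a b I : is_lub_Rbar (fun y => exists V, minor_fun V h a b /\ y = V b - V a) (Finite I) <-> High h a b I.
Proof.
  split.
  - intros [Hub Hg]. split.
    + intros U HU. apply (Hub (U b - U a)). exists U; auto.
    + intros eps He. apply NNPP; intro Hn.
      assert (Hb : is_ub_Rbar (fun y => exists V, minor_fun V h a b /\ y = V b - V a) (Finite (I - eps))).
      { intros y [U [HU ->]]. simpl. apply Rnot_lt_le; intro Hl. apply Hn. exists U; split; auto; lra. }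
      specialize (Hg _ Hb). simpl in Hg. lra.
  - intros [H1 H2]. split.
    + intros y [U [HU ->]]. simpl. auto.
    + intros l Hl. destruct l as [l| |]; simpl; auto.
      * apply Rnot_lt_le; intro Hlt. destruct (H2 ((I - l)/2) ltac:(lra)) as [U [HU HU2]].
        specialize (Hl (U b - U a) (ex_intro _ U (conj HU eq_refl))). simpl in Hl. lra.
      * destruct (H2 1 Rlt_0_1) as [U [HU _]]. apply (Hl (U b - U a)). exists U; auto.
Qed.

Lemma High_Low h a b I : High h a b I <-> Low (fun t => - h t) a b (- I).
Proof.
  split.
  - intros [H1 H2]. split.
    + intros U HU. assert (HV : minor_fun (fun t => - U t) h a b).
      { apply minor_neg. replace (fun t => - - U t) with U; auto. apply functional_extensionality; intros; ring. }
      specialize (H1 _ HV). lra.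
    + intros eps He. destruct (H2 eps He) as [V [HV HV2]]. exists (fun t => - V t). split.
      apply minor_neg; auto. lra.
  - intros [H1 H2]. split.
    + intros V HV. apply minor_neg in HV. specialize (H1 _ HV). lra.
    + intros eps He. destruct (H2 eps He) as [U [HU HU2]]. exists (fun t => - U t). split.
      apply minor_neg. replace (fun t => - - U t) with U; auto. apply functional_extensionality; intros; ring. lra.
Qed.

Lemma Laplace_iff h a b I : is_LaplaceInt h a b I <-> Low h a b I /\ Low (fun t => - h t) a b (- I).
Proof.
  unfold is_LaplaceInt. rewrite glb_Low, lub_High, High_Low. tauto.
Qed.

Lemma major_point U h a : cont_on U a a -> major_fun U h a a.
Proof. intros Hc. apply major_iff. split; auto. intros x Hx. split; intros; lra. Qed.

Lemma Low_point h a : Low h a a 0.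
Proof.
  split. intros U _. lra. intros eps He. exists (fun _ => 0). split.
  apply major_point. intros x _ e He'. exists 1; split; auto. lra. intros; rewrite Rminus_diag, Rabs_R0; auto. lra.
Qed.

Lemma Laplace_point h a : is_LaplaceInt h a a 0.
Proof. apply Laplace_iff. rewrite Ropp_0. split; apply Low_point. Qed.

Lemma Laplace_unique h a b I1 I2 : is_LaplaceInt h a b I1 -> is_LaplaceInt h a b I2 -> I1 = I2.
Proof.
  intros [H1 _] [H2 _]. apply is_glb_Rbar_unique in H1. apply is_glb_Rbar_unique in H2.
  rewrite H1 in H2. injection H2; auto.
Qed.

Lemma Low_ext h1 h2 a b I : (forall x, a <= x <= b -> h1 x = h2 x) -> Low h1 a b I -> Low h2 a b I.
Proof.
  intros E [H1 H2]. split.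
  - intros U HU. apply H1. apply (major_ext U h2); auto. intros; symmetry; auto.
  - intros eps He. destruct (H2 eps He) as [U [HU HU2]]. exists U; split; auto. apply (major_ext U h1); auto.
Qed.

Lemma ex_RInt_below (f : R -> R) x0 p q : (forall t, t < x0 -> continuous f t) -> p < x0 -> q < x0 -> ex_RInt f p q.
Proof.
  intros H Hp Hq. apply (ex_RInt_continuous (V:=R_CompleteNormedModule)). intros z Hz. apply H.
  assert (Rmax p q < x0) by (apply Rmax_lub_lt; auto). lra.
Qed.

Lemma abs_RInt_gen (f : R -> R) p q M : ex_RInt f p q -> (forall s, Rmin p q <= s <= Rmax p q -> Rabs (f s) <= M) ->
  Rabs (RInt f p q) <= Rabs (q - p) * M.
Proof.
  intros He H. destruct (Rle_dec p q).
  - rewrite (Rabs_right (q - p)) by lra. apply abs_RInt_le_const; auto. intros; apply H. rewrite Rmin_left, Rmax_right; lra.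
  - apply Rnot_le_lt in n. rewrite <- (opp_RInt_swap (V:=R_CompleteNormedModule)) by (apply (ex_RInt_swap (V:=R_CompleteNormedModule)); auto). unfold opp; simpl. rewrite Rabs_Ropp.
    rewrite (Rabs_left (q - p)) by lra. replace (- (q - p)) with (p - q) by ring.
    apply abs_RInt_le_const. lra. apply (ex_RInt_swap (V:=R_CompleteNormedModule)); auto.
    intros; apply H. rewrite Rmin_right, Rmax_left; lra.
Qed.

Lemma cont_RInt_below (f : R -> R) a x0 t : (forall t, t < x0 -> continuous f t) -> a < x0 -> t < x0 ->
  continuous (fun z => RInt f a z) t.
Proof.
  intros H Ha Ht. apply (continuous_RInt_1 (V:=R_CompleteNormedModule) f a t).
  assert (Hr : 0 < x0 - t) by lra. exists (mkposreal _ Hr). intros z Hz.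
  apply (RInt_correct (V:=R_CompleteNormedModule)). apply (ex_RInt_below f x0); auto.
  change (Rabs (z - t) < x0 - t) in Hz. apply Rabs_def2 in Hz. lra.
Qed.

Section Transform.
Variables (U h rho drho : R -> R) (a c x0 : R).
Hypotheses (Hac : a <= c) (Hcx : c < x0) (HU : forall t, continuous U t)
  (Hrho : forall t, t < x0 -> is_derive rho t (drho t)) (Hdrho : forall t, t < x0 -> continuous drho t).

Let T := fun t => rho t * U t - RInt (fun s => U s * drho s) a t.

Lemma cUd : forall t, t < x0 -> continuous (fun s => U s * drho s) t.
Proof. intros; apply cR_mult; auto. Qed.

Lemma T_cont : forall t, t < x0 -> continuous T t.
Proof.
  intros t Ht. unfold T. apply cR_minus. apply cR_mult; auto.
  apply (ex_derive_continuous (K:=R_AbsRing) (V:=R_NormedModule)). exists (drho t); auto.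
  apply (cont_RInt_below _ a x0); auto. apply cUd. lra.
Qed.

Lemma T_ident : forall p q, p < x0 -> q < x0 ->
  T q - T p - rho p * (U q - U p) = RInt (fun s => drho s * (U q - U s)) p q.
Proof.
  intros p q Hp Hq. unfold T.
  assert (Ea : forall u v, u < x0 -> v < x0 -> ex_RInt (fun s => U s * drho s) u v) by (intros; apply (ex_RInt_below _ x0); auto; apply cUd).
  assert (Ed : ex_RInt drho p q) by (apply (ex_RInt_below _ x0); auto).
  assert (Hc := RInt_Chasles (V:=R_CompleteNormedModule) (fun s => U s * drho s) a p q (Ea a p ltac:(lra) Hp) (Ea p q Hp Hq)).
  unfold plus in Hc; simpl in Hc. rewrite <- Hc.
  assert (Hr : is_RInt drho p q (minus (rho q) (rho p))).
  { apply (is_RInt_derive (V:=R_CompleteNormedModule) rho drho). intros; apply Hrho.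
    assert (Rmax p q < x0) by (apply Rmax_lub_lt; auto). lra.
    intros; apply Hdrho. assert (Rmax p q < x0) by (apply Rmax_lub_lt; auto). lra. }
  apply (is_RInt_unique (V:=R_CompleteNormedModule)) in Hr. unfold minus, plus, opp in Hr; simpl in Hr.
  rewrite (RInt_ext (V:=R_CompleteNormedModule) (fun s => drho s * (U q - U s)) (fun s => minus (scal (U q) (drho s)) (U s * drho s))).
  2:{ intros x _; change (drho x * (U q - U x) = U q * drho x + - (U x * drho x)); ring. }
  rewrite (RInt_minus (V:=R_CompleteNormedModule)). 2: apply (ex_RInt_scal (V:=R_CompleteNormedModule)); auto. 2: auto.
  rewrite (RInt_scal (V:=R_CompleteNormedModule)) by auto. unfold minus, plus, opp, scal; simpl; unfold mult; simpl.
  rewrite Hr. ring.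
Qed.

Lemma e_small : forall p, a <= p <= c -> forall eps, 0 < eps -> exists eta, 0 < eta /\
  forall q, a <= q <= c -> Rabs (q - p) <= eta -> Rabs (T q - T p - rho p * (U q - U p)) <= eps * Rabs (q - p).
Proof.
  intros p Hp eps He.
  destruct (bound_cont drho a c Hac) as [Kd HKd]. intros; apply Hdrho; lra.
  assert (HKd0 : 0 <= Kd) by (apply Rle_trans with (Rabs (drho a)); [apply Rabs_pos|apply HKd; lra]).
  set (e1 := eps / (2 * (Kd + 1))).
  assert (He1 : 0 < e1) by (unfold e1; apply Rdiv_lt_0_compat; lra).
  destruct (cont_eps U p (HU p) e1 He1) as [eta [Heta Heta2]].
  exists (eta / 2); split. lra. intros q Hq Hqp.
  rewrite T_ident by lra.
  apply Rle_trans with (Rabs (q - p) * (Kd * (2 * e1))).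
  - apply abs_RInt_gen. apply (ex_RInt_below _ x0). intros; apply cR_mult; [apply Hdrho; auto | apply cR_minus; [apply cR_const|apply HU]]. lra. lra.
    intros s Hs. rewrite Rabs_mult. apply Rmult_le_compat. apply Rabs_pos. apply Rabs_pos.
    apply HKd. split. apply Rle_trans with (Rmin p q). apply Rmin_glb; lra. lra. apply Rle_trans with (Rmax p q). lra. apply Rmax_lub; lra.
    assert (Hs1 : Rabs (s - p) < eta).
    { assert (Rmin p q <= s <= Rmax p q) by auto. assert (Hb := proj1 (Rabs_le_between _ _) Hqp). unfold Rmin, Rmax in *. destruct Rle_dec; apply Rabs_def1; lra. }
    assert (Hq1 : Rabs (q - p) < eta) by lra.
    assert (A1 := Heta2 s Hs1). assert (A2 := Heta2 q Hq1).
    replace (U q - U s) with ((U q - U p) - (U s - U p)) by ring.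
    apply Rle_trans with (Rabs (U q - U p) + Rabs (U s - U p)). 
    unfold Rminus at 1. rewrite <- (Rabs_Ropp (U s - U p)). apply Rabs_triang. lra.
  - rewrite Rmult_comm. apply Rmult_le_compat_r. apply Rabs_pos.
    unfold e1. replace (Kd * (2 * (eps / (2 * (Kd + 1))))) with (eps * (Kd / (Kd + 1))) by (field; lra).
    assert (Kd / (Kd + 1) <= 1). { apply Rmult_le_reg_r with (Kd+1). lra. unfold Rdiv. rewrite Rmult_assoc, Rinv_l; lra. }
    nra.
Qed.

Lemma cshift (f : R -> R) (x u : R) (sg : R) : continuous f (x + sg * u) -> continuous (fun u => f (x + sg * u)) u.
Proof.
  intros H. apply (cR_comp (fun u => x + sg * u) f). apply cR_plus. apply cR_const. apply cR_mult. apply cR_const. apply cR_id. auto.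
Qed.

Lemma transform_major : (forall t, a <= t <= c -> 0 <= rho t) -> major_fun U h a c ->
  major_fun T (fun t => rho t * h t) a c.
Proof.
  intros Hr0 H. apply major_iff in H. destruct H as [Hc H]. apply major_iff. split.
  - apply cont_on_of. intros; apply T_cont; lra.
  - intros x Hx. destruct (H x Hx) as [H1 H2]. split.
    + intros Hxc. destruct (H1 Hxc) as [d [Hd [Hd2 Hd3]]]. exists d; repeat split; auto.
      set (e := fun u => T (x + 1 * u) - T x - rho x * (U (x + 1 * u) - U x)).
      assert (Ce : forall u, 0 <= u <= d -> continuous e u).
      { intros u Hu. unfold e. apply cR_minus. apply cR_minus. apply cshift. apply T_cont. lra. apply cR_const.
        apply cR_mult. apply cR_const. apply cR_minus. apply cshift. apply HU. apply cR_const. }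
      assert (CU : forall u, 0 <= u <= d -> continuous (fun u => U (x + u) - U x) u).
      { intros u Hu. apply cR_minus. 
        apply (continuous_ext (fun u => U (x + 1 * u))). intros; f_equal; ring. apply cshift. apply HU. apply cR_const. }
      apply (EvGe_comb (LD1_right U x d) (Lap e d) _ _ _ Hd3 (Hr0 x Hx)).
      * apply KL. lra. auto. intros eps He. destruct (e_small x Hx eps He) as [eta [Heta Heta2]].
        exists eta; split; auto. intros u Hu Hud. unfold e.
        replace (x + 1 * u) with (x + u) by ring.
        replace u with (Rabs (x + u - x)) at 3 by (rewrite Rabs_right; lra).
        apply Heta2. lra. rewrite Rabs_right; lra.
      * intros s. rewrite !LD1r_Lap. rewrite <- Lap_lin by (lra || auto). apply Lap_ext. lra.
        intros u Hu. unfold e. rewrite Rmult_1_l. ring.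
    + intros Hxa. destruct (H2 Hxa) as [d [Hd [Hd2 Hd3]]]. exists d; repeat split; auto.
      set (e := fun u => T (x + -1 * u) - T x - rho x * (U (x + -1 * u) - U x)).
      assert (Ce : forall u, 0 <= u <= d -> continuous e u).
      { intros u Hu. unfold e. apply cR_minus. apply cR_minus. apply cshift. apply T_cont. lra. apply cR_const.
        apply cR_mult. apply cR_const. apply cR_minus. apply cshift. apply HU. apply cR_const. }
      assert (CU : forall u, 0 <= u <= d -> continuous (fun u => U (x - u) - U x) u).
      { intros u Hu. apply cR_minus. 
        apply (continuous_ext (fun u => U (x + -1 * u))). intros; f_equal; ring. apply cshift. apply HU. apply cR_const. }
      apply (EvGe_comb (LD1_left U x d) (fun s => - Lap e d s) _ _ _ Hd3 (Hr0 x Hx)).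
      * apply Van_opp. apply KL. lra. auto. intros eps He. destruct (e_small x Hx eps He) as [eta [Heta Heta2]].
        exists eta; split; auto. intros u Hu Hud. unfold e.
        replace (x + -1 * u) with (x - u) by ring.
        replace u with (Rabs (x - u - x)) at 3 by (rewrite Rabs_left1; lra).
        apply Heta2. lra. rewrite Rabs_left1; lra.
      * intros s. rewrite !LD1l_Lap. 
        rewrite (Lap_ext (fun u => T (x - u) - T x) (fun u => rho x * (U (x - u) - U x) + e u)).
        rewrite Lap_lin by (lra || auto). ring. lra.
        intros u Hu. unfold e. replace (x + -1 * u) with (x - u) by ring. ring.
Qed.

End Transform.

Ltac fixINR := repeat match goal with |- context [match ?m with 0%nat => 1 | S _ => INR ?m + 1 end] =>
  change (match m with 0%nat => 1 | S _ => INR m + 1 end) with (INR (S m)) end.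

Lemma cpow x m t : continuous (fun t => (x - t) ^ m) t.
Proof. apply (ex_derive_continuous (K:=R_AbsRing) (V:=R_NormedModule)). auto_derive. auto. Qed.

Lemma d_psi x m t : is_derive (fun t => (x - t) ^ S m) t (- INR (S m) * (x - t) ^ m).
Proof. auto_derive. auto. fixINR. unfold Rminus. ring. Qed.

Lemma d_phi x m t : t < x -> is_derive (fun t => / (x - t) ^ S m) t (INR (S m) * / (x - t) ^ S (S m)).
Proof.
  intros H. auto_derive. simpl. apply Rmult_integral_contrapositive; split; [lra | apply pow_nonzero; lra].
  fixINR. simpl. unfold Rminus. field. repeat split; try apply pow_nonzero; lra.
Qed.

Lemma c_dphi x m t : t < x -> continuous (fun t => INR (S m) * / (x - t) ^ S (S m)) t.
Proof.
  intros H. apply (ex_derive_continuous (K:=R_AbsRing) (V:=R_NormedModule)). auto_derive.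
  simpl. apply Rmult_integral_contrapositive; split; [lra | ]. apply Rmult_integral_contrapositive; split; [lra | apply pow_nonzero; lra].
Qed.

Lemma Ipow x m a : RInt (fun t => INR (S m) * (x - t) ^ m) a x = (x - a) ^ S m.
Proof.
  assert (H : is_RInt (fun t => INR (S m) * (x - t) ^ m) a x (minus ((fun t => - (x - t) ^ S m) x) ((fun t => - (x - t) ^ S m) a))).
  { apply (is_RInt_derive (V:=R_CompleteNormedModule) (fun t => - (x - t) ^ S m)).
    intros t _. auto_derive. auto. fixINR. unfold Rminus. ring.
    intros t _. apply cR_mult. apply cR_const. apply cpow. }
  apply (is_RInt_unique (V:=R_CompleteNormedModule)) in H. rewrite H.
  unfold minus, plus, opp; simpl. rewrite Rminus_diag. ring.
Qed.

Section Half.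
Variables (L F : R -> R) (a x : R) (m : nat).
Hypotheses (Hax : a < x) (HF : forall t, continuous F t) (HFa : F a = 0)
  (HL : forall t, a <= t <= x -> Low L a t (F t)).

Let psi := fun t => (x - t) ^ S m.
Let dpsi := fun t => - INR (S m) * (x - t) ^ m.
Let phi := fun t => / (x - t) ^ S m.
Let dphi := fun t => INR (S m) * / (x - t) ^ S (S m).
Let g := fun t => L t * (x - t) ^ S m.
Let I := RInt (fun t => INR (S m) * (x - t) ^ m * F t) a x.

Lemma cf t : continuous (fun t => INR (S m) * (x - t) ^ m * F t) t.
Proof. apply cR_mult; auto. apply cR_mult. apply cR_const. apply cpow. Qed.

Lemma upper_part : forall eps, 0 < eps -> exists V, major_fun V g a x /\ V x - V a <= I + eps.
Proof.
  intros eps He.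
  set (e1 := eps / ((x - a) ^ S m + 1)).
  assert (Hxa : 0 < (x - a) ^ S m) by (apply pow_lt; lra).
  assert (He1 : 0 < e1) by (unfold e1; apply Rdiv_lt_0_compat; lra).
  destruct (proj2 (HL x ltac:(lra)) e1 He1) as [U [HU HU2]].
  set (U1 := fun t => U (clamp a x t) + - U a).
  assert (CU1 : forall t, continuous U1 t).
  { intros t. unfold U1. apply cR_plus. apply cont_clamp. lra. apply major_iff in HU; apply HU. apply cR_const. }
  assert (MU1 : major_fun U1 L a x).
  { apply (major_shift (fun t => U (clamp a x t))). apply major_clamp. lra. auto. }
  assert (U1a : U1 a = 0) by (unfold U1; rewrite clamp_id by lra; ring).
  assert (U1x : U1 x <= F x + e1) by (unfold U1; rewrite clamp_id by lra; lra).
  assert (Cl : forall t, a <= t <= x -> U1 t <= F t + e1).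
  { intros t Ht. apply Rnot_lt_le. intro Hlt.
    assert (Hat : a < t). { destruct (Req_dec a t); [subst t; rewrite U1a, HFa in Hlt; lra | lra]. }
    set (e2 := (U1 t - F t - e1) / 2).
    destruct (proj2 (HL t Ht) e2 ltac:(unfold e2; lra)) as [U' [HU' HU'2]].
    assert (M1 : major_fun (fun y => U' y + (U1 t - U' t)) L a t) by (apply major_shift; auto).
    assert (M2 : major_fun U1 L t x) by (apply (major_restrict U1 L a x); auto; lra).
    assert (MG := major_glue _ _ L a t x Ht M1 M2 ltac:(cbv beta; ring)).
    assert (HG := proj1 (HL x ltac:(lra)) _ MG). simpl in HG.
    destruct (Rle_dec x t); destruct (Rle_dec a t); try lra.
    - assert (x = t) by lra. subst t. unfold e2 in *. lra.
    - unfold e2 in *. lra. }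
  set (V := fun t => psi t * U1 t - RInt (fun s => U1 s * dpsi s) a t).
  exists V. split.
  - apply (major_ext V (fun t => psi t * L t)). intros; unfold g, psi; ring.
    apply (transform_major U1 L psi dpsi a x (x + 1)); try lra; auto.
    intros; apply d_psi. intros; unfold dpsi; apply cR_mult; [apply cR_const | apply cpow].
    intros t Ht; unfold psi; apply pow_le; lra.
  - unfold V. rewrite RInt_point. unfold zero; simpl. unfold psi at 1. rewrite Rminus_diag, pow_i by lia. rewrite U1a.
    assert (E : RInt (fun s => U1 s * dpsi s) a x = - RInt (fun s => INR (S m) * (x - s) ^ m * U1 s) a x).
    { rewrite <- (RInt_opp (V:=R_CompleteNormedModule)). apply RInt_ext. intros; unfold dpsi, opp; simpl; ring.
      apply ex_RInt_cont. lra. intros; apply cR_mult; [apply cR_mult; [apply cR_const|apply cpow]|auto]. }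
    rewrite E.
    assert (Hle : RInt (fun s => INR (S m) * (x - s) ^ m * U1 s) a x <=
                  RInt (fun s => INR (S m) * (x - s) ^ m * F s + e1 * (INR (S m) * (x - s) ^ m)) a x).
    { apply RInt_le. lra.
      apply ex_RInt_cont. lra. intros; apply cR_mult; [apply cR_mult; [apply cR_const|apply cpow]|auto].
      apply ex_RInt_cont. lra. intros; apply cR_plus. apply cf. apply cR_mult. apply cR_const. apply cR_mult; [apply cR_const|apply cpow].
      intros t Ht. specialize (Cl t ltac:(lra)).
      assert (0 <= INR (S m) * (x - t) ^ m) by (apply Rmult_le_pos; [apply pos_INR| apply pow_le; lra]). nra. }
    rewrite (RInt_plus (V:=R_CompleteNormedModule) (fun s => INR (S m) * (x - s) ^ m * F s) (fun s => e1 * (INR (S m) * (x - s) ^ m))) in Hle.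
    2: apply ex_RInt_cont; [lra | intros; apply cf].
    2: apply ex_RInt_cont; [lra | intros; apply cR_mult; [apply cR_const| apply cR_mult; [apply cR_const|apply cpow]]].
    rewrite (RInt_scal (V:=R_CompleteNormedModule) (fun s => INR (S m) * (x - s) ^ m)) in Hle.
    2: apply ex_RInt_cont; [lra | intros; apply cR_mult; [apply cR_const|apply cpow]].
    rewrite Ipow in Hle. change (plus ?A ?B) with (A + B) in Hle. change (scal ?A ?B) with (A * B) in Hle.
    assert (e1 * ((x - a) ^ S m) <= eps).
    { unfold e1. apply Rle_trans with (eps / ((x - a) ^ S m + 1) * ((x - a) ^ S m + 1)).
      apply Rmult_le_compat_l. left; apply Rdiv_lt_0_compat; lra. lra. right; field; lra. }
    unfold I. lra.
Qed.

Lemma lower_part : forall V, major_fun V g a x -> I <= V x - V a.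
Proof.
  intros V HV.
  set (V1 := fun t => V (clamp a x t) + - V a).
  assert (CV1 : forall t, continuous V1 t).
  { intros t. unfold V1. apply cR_plus. apply cont_clamp. lra. apply major_iff in HV; apply HV. apply cR_const. }
  assert (MV1 : major_fun V1 g a x).
  { apply (major_shift (fun t => V (clamp a x t))). apply major_clamp. lra. auto. }
  assert (V1a : V1 a = 0) by (unfold V1; rewrite clamp_id by lra; ring).
  assert (V1x : V1 x = V x - V a) by (unfold V1; rewrite clamp_id by lra; ring).
  set (P := fun t => RInt (fun s => V1 s * dphi s) a t).
  set (H := fun t => phi t * V1 t - P t).
  assert (Cdphi : forall t, t < x -> continuous dphi t) by (intros; apply c_dphi; auto).
  assert (Cphi : forall t, t < x -> continuous phi t).
  { intros t Ht. apply (ex_derive_continuous (K:=R_AbsRing) (V:=R_NormedModule)). exists (dphi t). apply d_phi; auto. }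
  assert (CP : forall t, t < x -> continuous P t).
  { intros t Ht. apply (cont_RInt_below _ a x); auto. intros; apply cR_mult; auto. }
  assert (CH : forall t, t < x -> continuous H t).
  { intros t Ht. apply cR_minus. apply cR_mult; auto. auto. }
  assert (psiphi : forall t, t < x -> psi t * phi t = 1).
  { intros t Ht. unfold psi, phi. field. apply pow_nonzero; lra. }
  assert (Hge : forall t', a <= t' < x -> F t' <= H t').
  { intros t' Ht'.
    assert (MR : major_fun V1 g a t') by (apply (major_restrict V1 g a x); auto; lra).
    assert (MT := transform_major V1 g phi dphi a t' x ltac:(lra) ltac:(lra) CV1
        (fun t Ht => d_phi x m t Ht) Cdphi ltac:(intros t Ht; unfold phi; left; apply Rinv_0_lt_compat, pow_lt; lra) MR).
    assert (MT' : major_fun H L a t').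
    { apply (major_ext _ (fun t => phi t * g t)); auto. intros t Ht. unfold phi, g. field. apply pow_nonzero; lra. }
    assert (Hl := proj1 (HL t' ltac:(lra)) H MT').
    assert (Ha : H a = 0) by (unfold H, P; rewrite RInt_point, V1a; unfold zero; simpl; ring).
    lra. }
  assert (Hid : forall t', a <= t' < x -> V1 t' = psi t' * H t' + RInt (fun t => INR (S m) * (x - t) ^ m * H t) a t').
  { intros t' Ht'.
    assert (Hi : is_RInt (fun t => dpsi t * P t + psi t * (V1 t * dphi t)) a t' (minus ((fun t => psi t * P t) t') ((fun t => psi t * P t) a))).
    { apply (is_RInt_derive (V:=R_CompleteNormedModule) (fun t => psi t * P t)).
      - intros t Ht. rewrite Rmin_left, Rmax_right in Ht by lra.
        apply (is_derive_mult (K:=R_AbsRing) psi P t (dpsi t) (V1 t * dphi t)).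
        apply d_psi.
        apply (is_derive_RInt (V:=R_CompleteNormedModule) (fun s => V1 s * dphi s) P a t).
        assert (Hr : 0 < x - t) by lra. exists (mkposreal _ Hr). intros z Hz.
        apply (RInt_correct (V:=R_CompleteNormedModule)). apply (ex_RInt_below _ x). intros; apply cR_mult; auto. lra.
        change (Rabs (z - t) < x - t) in Hz. apply Rabs_def2 in Hz. lra.
        apply cR_mult; auto. apply Cdphi; lra.
        intros; unfold mult; simpl; ring.
      - intros t Ht. rewrite Rmin_left, Rmax_right in Ht by lra.
        apply cR_plus. apply cR_mult. unfold dpsi; apply cR_mult; [apply cR_const|apply cpow]. apply CP; lra.
        apply cR_mult. apply cpow. apply cR_mult. auto. apply Cdphi; lra. }
    apply (is_RInt_unique (V:=R_CompleteNormedModule)) in Hi.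
    unfold minus, plus, opp in Hi; simpl in Hi.
    rewrite (RInt_ext (V:=R_CompleteNormedModule) (fun t => INR (S m) * (x - t) ^ m * H t) (fun t => dpsi t * P t + psi t * (V1 t * dphi t))).
    2:{ intros t Ht. rewrite Rmin_left, Rmax_right in Ht by lra. unfold H, dpsi, psi, phi, dphi.
        change (INR (S m) * (x - t) ^ m * (/ (x - t) ^ S m * V1 t - P t) =
          - INR (S m) * (x - t) ^ m * P t + (x - t) ^ S m * (V1 t * (INR (S m) * / (x - t) ^ S (S m)))).
        simpl. field. split; [apply pow_nonzero; lra | lra]. }
    rewrite Hi. unfold P at 2. rewrite RInt_point. unfold zero; simpl.
    unfold H. rewrite Rmult_minus_distr_l, <- Rmult_assoc, psiphi by lra. ring. }
  set (J := fun t => psi t * F t + RInt (fun t => INR (S m) * (x - t) ^ m * F t) a t).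
  assert (HJ : forall t', a <= t' < x -> J t' <= V1 t').
  { intros t' Ht'. rewrite (Hid t' Ht'). unfold J. apply Rplus_le_compat.
    apply Rmult_le_compat_l. unfold psi; apply pow_le; lra. apply Hge; auto.
    apply RInt_le. lra. apply ex_RInt_cont. lra. intros; apply cf.
    apply ex_RInt_cont. lra. intros; apply cR_mult. apply cR_mult. apply cR_const. apply cpow. apply CH; lra.
    intros t Ht. apply Rmult_le_compat_l. apply Rmult_le_pos. apply pos_INR. apply pow_le; lra. apply Hge; lra. }
  assert (CJ : continuous J x).
  { unfold J. apply cR_plus. apply cR_mult. apply cpow. auto. apply (cont_RInt_below _ a (x + 1)). intros; apply cf. lra. lra. }
  assert (Jx : J x = I) by (unfold J, psi, I; rewrite Rminus_diag, pow_i by lia; ring).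
  rewrite <- V1x. apply Rnot_lt_le. intro Hlt.
  set (e := (I - V1 x) / 2).
  destruct (cont_eps V1 x (CV1 x) e ltac:(unfold e; lra)) as [n1 [Hn1 Hn1']].
  destruct (cont_eps J x CJ e ltac:(unfold e; lra)) as [n2 [Hn2 Hn2']].
  set (d := Rmin (Rmin n1 n2) (x - a)).
  assert (Hd : 0 < d) by (unfold d; repeat apply Rmin_glb_lt; lra).
  assert (Hd1 : d <= n1) by (unfold d; eapply Rle_trans; [apply Rmin_l| apply Rmin_l]).
  assert (Hd2 : d <= n2) by (unfold d; eapply Rle_trans; [apply Rmin_l| apply Rmin_r]).
  assert (Hd3 : d <= x - a) by (unfold d; apply Rmin_r).
  set (t' := x - d / 2).
  assert (Ht' : Rabs (t' - x) < d) by (unfold t'; rewrite Rabs_left; lra).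
  specialize (Hn1' t' ltac:(lra)). specialize (Hn2' t' ltac:(lra)).
  specialize (HJ t' ltac:(unfold t'; lra)).
  apply Rabs_def2 in Hn1'. apply Rabs_def2 in Hn2'. rewrite Jx in Hn2'. unfold e in *. lra.
Qed.

Lemma half_Low : Low g a x I.
Proof. split. apply lower_part. apply upper_part. Qed.

End Half.

Ltac toR := match goal with |- @eq _ ?A ?B => change (@eq R A B) end.
Ltac gINR := repeat match goal with |- context [INR ?n] => let z := fresh "z" in set (z := INR n) in * end.

Lemma dR_plus (f g : R -> R) x df dg : is_derive f x df -> is_derive g x dg -> is_derive (fun y => f y + g y) x (df + dg).
Proof. intros; apply (is_derive_plus (K:=R_AbsRing) (V:=R_NormedModule) f g); auto. Qed.
Lemma dR_minus (f g : R -> R) x df dg : is_derive f x df -> is_derive g x dg -> is_derive (fun y => f y - g y) x (df - dg).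
Proof. intros; apply (is_derive_minus (K:=R_AbsRing) (V:=R_NormedModule) f g); auto. Qed.
Lemma dR_mult (f g : R -> R) x df dg : is_derive f x df -> is_derive g x dg -> is_derive (fun y => f y * g y) x (df * g x + f x * dg).
Proof. intros; apply (is_derive_mult (K:=R_AbsRing) f g); auto. intros; unfold mult; simpl; ring. Qed.
Lemma dR_ext (f g : R -> R) x l : (forall y, f y = g y) -> is_derive f x l -> is_derive g x l.
Proof. intros; apply (is_derive_ext (K:=R_AbsRing) (V:=R_NormedModule) f g); auto. Qed.
Lemma dR_eq (f : R -> R) x l l' : is_derive f x l -> l = l' -> is_derive f x l'.
Proof. intros H ->; auto. Qed.

Lemma deriv_interior (G G' : R -> R) a b t : deriv_on G G' a b -> a < t < b ->
  is_derive (fun y => G (clamp a b y)) t (G' t).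
Proof.
  intros HD Ht. apply is_derive_Reals. intros eps He.
  destruct (HD t ltac:(lra) eps He) as [d [Hd Hd2]].
  set (d' := Rmin d (Rmin (t - a) (b - t))).
  assert (Hd' : 0 < d') by (unfold d'; repeat apply Rmin_glb_lt; lra).
  assert (H1 : d' <= d) by (unfold d'; apply Rmin_l).
  assert (H2 : d' <= t - a) by (unfold d'; eapply Rle_trans; [apply Rmin_r|apply Rmin_l]).
  assert (H3 : d' <= b - t) by (unfold d'; eapply Rle_trans; [apply Rmin_r|apply Rmin_r]).
  exists (mkposreal _ Hd'). intros h Hh Hh2. simpl in Hh2. apply Rabs_def2 in Hh2.
  rewrite !clamp_id by lra.
  replace h with (t + h - t) at 2 by ring.
  apply Hd2. lra. replace (t + h - t) with h by ring. split. apply Rabs_pos_lt; auto. apply Rabs_def1; lra.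
Qed.

Section Taylor.
Variables (D : nat -> R -> R) (a b x : R) (m : nat).
Hypotheses (Hab : a < x) (Hxb : x <= b)
  (HD : forall k, (k <= m)%nat -> deriv_on (D k) (D (S k)) a b)
  (HC : forall k, (k <= S m)%nat -> cont_on (D k) a b).

Let Dc := fun k t => D k (clamp a b t).

Lemma Dc_cont : forall k, (k <= S m)%nat -> forall t, continuous (Dc k) t.
Proof. intros k Hk t. apply cont_clamp. lra. auto. Qed.

Let Sm := fun j t => sum_f_R0 (fun k => Dc k t * (x - t) ^ k / INR (fact k)) j.

Lemma Sm_deriv : forall j, (j <= m)%nat -> forall t, a < t < b -> is_derive (Sm j) t (Dc (S j) t * (x - t) ^ j / INR (fact j)).
Proof.
  induction j as [|j IH]; intros Hj t Ht.
  - assert (A2 : is_derive (Dc 0%nat) t (Dc 1%nat t)).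
    { unfold Dc. rewrite (clamp_id a b t) by lra. apply deriv_interior; auto; apply HD; lia. }
    apply (dR_ext _ (Sm 0%nat)) in A2. 2:{ intros y; unfold Sm; simpl. field. }
    apply (dR_eq _ _ _ _ A2). simpl. field.
  - assert (A1 := IH ltac:(lia) t Ht).
    assert (A2 : is_derive (Dc (S j)) t (Dc (S (S j)) t)).
    { unfold Dc. rewrite (clamp_id a b t) by lra. apply deriv_interior; auto; apply HD; lia. }
    assert (A3 : is_derive (fun t => (x - t) ^ S j / INR (fact (S j))) t (- INR (S j) * (x - t) ^ j / INR (fact (S j)))).
    { apply (dR_ext (fun y => / INR (fact (S j)) * (x - y) ^ S j)). intros; toR; gINR; unfold Rdiv; ring.
      apply (dR_eq _ _ (/ INR (fact (S j)) * (- INR (S j) * (x - t) ^ j))). apply is_derive_scal. apply d_psi.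
      toR. gINR. unfold Rdiv; ring. }
    assert (A4 := dR_mult _ _ _ _ _ A2 A3). assert (A5 := dR_plus _ _ _ _ _ A1 A4).
    apply (dR_ext _ (Sm (S j))) in A5.
    2:{ intros y. unfold Sm. rewrite tech5. toR. gINR. unfold Rdiv; ring. }
    apply (dR_eq _ _ _ _ A5).
    rewrite fact_simpl, mult_INR.
    assert (INR (fact j) <> 0) by (apply not_0_INR, fact_neq_0).
    assert (INR (S j) <> 0) by (apply not_0_INR; lia).
    toR. gINR. unfold Rdiv. field. auto.
Qed.

Lemma Sm_cont : forall j, (j <= m)%nat -> forall t, continuous (Sm j) t.
Proof.
  induction j as [|j IH]; intros Hj t.
  - apply (continuous_ext (fun t => Dc 0%nat t * (x - t) ^ 0 / INR (fact 0))). intros; reflexivity.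
    unfold Rdiv. apply cR_mult. apply cR_mult. apply Dc_cont; lia. apply cpow. apply cR_const.
  - apply (continuous_ext (fun t => Sm j t + Dc (S j) t * (x - t) ^ S j / INR (fact (S j)))).
    intros; unfold Sm; rewrite tech5; reflexivity.
    apply cR_plus. apply IH; lia. unfold Rdiv. apply cR_mult. apply cR_mult. apply Dc_cont; lia. apply cpow. apply cR_const.
Qed.

Lemma Sm_x : forall j, Sm j x = Dc 0%nat x.
Proof.
  induction j as [|j IH].
  - unfold Sm; simpl. field.
  - unfold Sm in *; rewrite tech5, IH. rewrite Rminus_diag, pow_i by lia. unfold Rdiv; ring.
Qed.

Let f1 := fun s => Dc (S m) s * (x - s) ^ m.
Lemma cf1 : forall t, continuous f1 t.
Proof. intros; unfold f1; apply cR_mult; [apply Dc_cont; lia | apply cpow]. Qed.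
Lemma exf1 : forall p q, ex_RInt f1 p q.
Proof. intros; apply (ex_RInt_continuous (V:=R_CompleteNormedModule)); intros; apply cf1. Qed.

Let Phi := fun t => Sm m t - / INR (fact m) * RInt f1 x t.

Lemma Phi_eq : Phi x = Phi a.
Proof.
  assert (Hd : forall t, a < t < x -> is_derive Phi t 0).
  { intros t Ht. unfold Phi.
    apply (dR_eq _ _ (Dc (S m) t * (x - t) ^ m / INR (fact m) - / INR (fact m) * f1 t)).
    apply dR_minus. apply Sm_deriv; auto. lra.
    apply is_derive_scal. apply (is_derive_RInt (V:=R_CompleteNormedModule) f1 (fun z => RInt f1 x z) x t).
    exists (mkposreal 1 Rlt_0_1). intros z _. apply (RInt_correct (V:=R_CompleteNormedModule)). apply exf1.
    apply cf1. unfold f1. toR. gINR. unfold Rdiv; ring. }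
  destruct (MVT_gen Phi a x (fun _ => 0)) as [c [_ Hc]].
  - rewrite Rmin_left, Rmax_right by lra. auto.
  - rewrite Rmin_left, Rmax_right by lra. intros t Ht. apply continuity_pt_filterlim.
    unfold Phi. apply (cR_minus (Sm m) (fun y => / INR (fact m) * RInt f1 x y)). apply Sm_cont; auto.
    apply (cR_mult (fun _ => / INR (fact m)) (fun y => RInt f1 x y)). apply cR_const.
    apply (continuous_RInt_1 (V:=R_CompleteNormedModule) f1 x t). exists (mkposreal 1 Rlt_0_1). intros z _.
    apply (RInt_correct (V:=R_CompleteNormedModule)). apply exf1.
  - lra.
Qed.

Lemma taylor : D 0%nat x = sum_f_R0 (fun k => D k a / INR (fact k) * (x - a) ^ k) (S m)
   + RInt (fun t => INR (S m) * (x - t) ^ m * (Dc (S m) t - D (S m) a)) a x / INR (fact (S m)).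
Proof.
  assert (E := Phi_eq). unfold Phi in E. rewrite Sm_x, RInt_point in E. unfold zero in E; simpl in E.
  rewrite <- (opp_RInt_swap (V:=R_CompleteNormedModule)) in E by apply exf1. unfold opp in E; simpl in E.
  assert (E2 : RInt (fun t => INR (S m) * (x - t) ^ m * (Dc (S m) t - D (S m) a)) a x =
     INR (S m) * RInt f1 a x - D (S m) a * RInt (fun t => INR (S m) * (x - t) ^ m) a x).
  { rewrite (RInt_ext (V:=R_CompleteNormedModule) _ (fun t => minus (scal (INR (S m)) (f1 t)) (scal (D (S m) a) (INR (S m) * (x - t) ^ m)))).
    2:{ intros; unfold f1, minus, plus, opp, scal; simpl; unfold mult; simpl. toR. gINR. ring. }
    assert (Ep : ex_RInt (fun t => INR (S m) * (x - t) ^ m) a x).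
    { apply ex_RInt_cont. lra. intros; apply cR_mult; [apply cR_const|apply cpow]. }
    assert (E1 : ex_RInt f1 a x) by apply exf1.
    rewrite (RInt_minus (V:=R_CompleteNormedModule)).
    rewrite (RInt_scal (V:=R_CompleteNormedModule) f1) by auto.
    rewrite (RInt_scal (V:=R_CompleteNormedModule) (fun t => INR (S m) * (x - t) ^ m)) by auto. reflexivity.
    apply (ex_RInt_scal (V:=R_CompleteNormedModule)). auto.
    apply (ex_RInt_scal (V:=R_CompleteNormedModule)). auto. }
  rewrite E2, Ipow, tech5.
  assert (ES : sum_f_R0 (fun k => D k a / INR (fact k) * (x - a) ^ k) m = Sm m a).
  { unfold Sm. apply sum_eq. intros i Hi. unfold Dc. rewrite clamp_id by lra. unfold Rdiv; ring. }
  rewrite ES.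
  replace (Dc 0%nat x) with (D 0%nat x) in E by (unfold Dc; rewrite clamp_id; lra).
  rewrite fact_simpl, mult_INR.
  assert (INR (fact m) <> 0) by (apply not_0_INR, fact_neq_0).
  assert (INR (S m) <> 0) by (apply not_0_INR; lia).
  rewrite Rmult_0_r, Rminus_0_r in E. rewrite E. gINR. unfold Rdiv. field. auto.
Qed.

End Taylor.

Lemma laplace_main (L F : R -> R) a x m : a < x -> (forall t, continuous F t) -> F a = 0 ->
  (forall t, a <= t <= x -> is_LaplaceInt L a t (F t)) ->
  is_LaplaceInt (fun t => L t * (x - t) ^ S m) a x (RInt (fun t => INR (S m) * (x - t) ^ m * F t) a x).
Proof.
  intros Hax HF HFa HL. apply Laplace_iff. split.
  - apply half_Low; auto. intros t Ht. apply (proj1 (proj1 (Laplace_iff _ _ _ _) (HL t Ht))).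
  - assert (Hh := half_Low (fun t => - L t) (fun t => - F t) a x m Hax ltac:(intros; apply cR_opp; auto) ltac:(cbv beta; rewrite HFa; ring)
       ltac:(intros t Ht; apply (proj2 (proj1 (Laplace_iff _ _ _ _) (HL t Ht))))).
    assert (E : RInt (fun t => INR (S m) * (x - t) ^ m * - F t) a x = - RInt (fun t => INR (S m) * (x - t) ^ m * F t) a x).
    { rewrite <- (RInt_opp (V:=R_CompleteNormedModule)). apply RInt_ext. intros; unfold opp; simpl; ring.
      apply ex_RInt_cont. lra. intros; apply cf; auto. }
    cbv beta in Hh. rewrite E in Hh. apply (Low_ext (fun t => - L t * (x - t) ^ S m)); auto. intros; ring.
Qed.

Lemma sum_at_a (D : nat -> R -> R) a n : sum_f_R0 (fun k => D k a / INR (fact k) * (a - a) ^ k) n = D 0%nat a.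
Proof.
  induction n as [|n IH]. simpl. field. rewrite tech5, IH. rewrite Rminus_diag, pow_i by lia. ring.
Qed.

Lemma Rbar_mult_pos_p c : 0 < c -> Rbar_mult (Finite c) p_infty = p_infty.
Proof.
  intros Hc. unfold Rbar_mult, Rbar_mult'. destruct (Rle_dec 0 c); [|lra].
  destruct (Rle_lt_or_eq_dec 0 c r); [reflexivity|lra].
Qed.

Lemma main_at n a b (f : R -> R) (D : nat -> R -> R) (L : R -> R) x :
  a < b ->
  (forall x, a <= x <= b -> D 0%nat x = f x) ->
  (forall k, (k < n)%nat -> deriv_on (D k) (D (S k)) a b) ->
  (forall k, (k <= n)%nat -> cont_on (D k) a b) ->
  (forall x, a <= x <= b -> is_LaplaceInt L a x (D n x - D n a)) ->
  a <= x <= b ->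
  exists I, is_LaplaceInt (fun t => L t * (x - t) ^ n) a x I /\
    f x = sum_f_R0 (fun k => D k a / INR (fact k) * (x - a) ^ k) n + I / INR (fact n) /\
    (forall A, (forall t, a <= t <= x -> Rabs (D n t - D n a) <= A) -> Rabs I <= (x - a) ^ n * A).
Proof.
  intros Hab Hf HD HC HL Hx.
  set (F := fun t => D n (clamp a b t) - D n a).
  assert (CF : forall t, continuous F t).
  { intros t. unfold F. apply cR_minus. apply cont_clamp. lra. auto. apply cR_const. }
  assert (EF : forall t, a <= t <= b -> F t = D n t - D n a) by (intros; unfold F; rewrite clamp_id; lra).
  assert (HFa : F a = 0) by (rewrite EF; lra).
  destruct (Req_dec x a) as [->|Hxa].
  - exists 0. split. apply Laplace_point. split.
    rewrite <- Hf by lra. rewrite sum_at_a. unfold Rdiv; ring.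
    intros A HA. specialize (HA a ltac:(lra)). rewrite Rminus_diag, Rabs_R0 in HA.
    rewrite Rabs_R0. apply Rmult_le_pos; auto. apply pow_le; lra.
  - assert (Hax : a < x) by lra.
    destruct n as [|m].
    + exists (D 0%nat x - D 0%nat a). split.
      replace (fun t => L t * (x - t) ^ 0) with L. apply HL; auto.
      apply functional_extensionality; intros; simpl; ring.
      split. rewrite <- Hf by lra. simpl. field.
      intros A HA. simpl. rewrite Rmult_1_l. apply HA; lra.
    + exists (RInt (fun t => INR (S m) * (x - t) ^ m * F t) a x). split.
      apply laplace_main; auto. intros t Ht. rewrite EF by lra. apply HL; lra.
      split.
      * rewrite <- Hf by lra. rewrite (taylor D a b x m); auto; try lra.
        intros k Hk; apply HD; lia.
      * intros A HA.
        assert (HA0 : 0 <= A) by (apply Rle_trans with (Rabs (D (S m) a - D (S m) a)); [apply Rabs_pos|apply HA; lra]).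
        apply Rle_trans with (RInt (fun t => A * (INR (S m) * (x - t) ^ m)) a x).
        apply abs_RInt_bound. lra. apply ex_RInt_cont. lra. intros; apply cf; auto.
        apply ex_RInt_cont. lra. intros; apply cR_mult. apply cR_const. apply cR_mult. apply cR_const. apply cpow.
        intros t Ht. rewrite Rabs_mult, Rabs_right. rewrite EF by lra.
        assert (HAt := HA t ltac:(lra)).
        assert (0 <= INR (S m) * (x - t) ^ m) by (apply Rmult_le_pos; [apply pos_INR|apply pow_le; lra]).
        nra. apply Rle_ge, Rmult_le_pos; [apply pos_INR|apply pow_le; lra].
        rewrite (RInt_scal (V:=R_CompleteNormedModule) (fun t => INR (S m) * (x - t) ^ m)).
        rewrite Ipow. unfold scal; simpl; unfold mult; simpl. right; ring.
        apply ex_RInt_cont. lra. intros; apply cR_mult. apply cR_const. apply cpow.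
Qed.

Theorem theorem9p1 (n : nat) (a b : R) (f : R -> R) (D : nat -> R -> R)
  (L : R -> R) :
  a < b ->
  (forall x, a <= x <= b -> D 0%nat x = f x) ->
  (forall k, (k < n)%nat -> deriv_on (D k) (D (S k)) a b) ->
  (forall k, (k <= n)%nat -> cont_on (D k) a b) ->
  (exists N, null_set N /\
     forall x, a <= x <= b -> ~ N x -> is_LD D n a b x (L x)) ->
  (exists I, is_LaplaceInt L a b I) ->
  (forall x, a <= x <= b -> is_LaplaceInt L a x (D n x - D n a)) ->
  (forall x, a <= x <= b -> exists I,
      is_LaplaceInt (fun t => L t * (x - t) ^ n) a x I /\
      f x = sum_f_R0 (fun k => D k a / INR (fact k) * (x - a) ^ k) n
            + I / INR (fact n)) /\
  Rbar_le
    (Lub_Rbar (fun y => exists x I, a <= x <= b /\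
        is_LaplaceInt (fun t => L t * (x - t) ^ n) a x I /\
        y = Rabs (I / INR (fact n))))
    (Rbar_mult (Finite ((b - a) ^ n / INR (fact n))) (Alex_norm L a b)).
Proof.
  intros Hab Hf HD HC _ _ HL. split.
  - intros x Hx. destruct (main_at n a b f D L x Hab Hf HD HC HL Hx) as [I [H1 [H2 _]]]. exists I; auto.
  - assert (HAl : forall t, a <= t <= b -> Rbar_le (Finite (Rabs (D n t - D n a))) (Alex_norm L a b)).
    { intros t Ht. unfold Alex_norm. destruct (Lub_Rbar_correct (fun y => exists x I, a <= x <= b /\ is_LaplaceInt L a x I /\ y = Rabs I)) as [Hub _].
      apply Hub. exists t, (D n t - D n a). auto. }
    assert (Hf0 : 0 < INR (fact n)) by (apply lt_0_INR, lt_O_fact).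
    assert (Hc : 0 < (b - a) ^ n / INR (fact n)) by (apply Rdiv_lt_0_compat; auto; apply pow_lt; lra).
    destruct (Alex_norm L a b) as [A| |] eqn:EA.
    + simpl. destruct (Lub_Rbar_correct (fun y => exists x I, a <= x <= b /\
        is_LaplaceInt (fun t => L t * (x - t) ^ n) a x I /\ y = Rabs (I / INR (fact n)))) as [_ Hl].
      apply Hl. intros y [x [I' [Hx [HI' ->]]]].
      destruct (main_at n a b f D L x Hab Hf HD HC HL Hx) as [I [H1 [_ H3]]].
      rewrite (Laplace_unique _ _ _ _ _ HI' H1).
      assert (Hb : Rabs I <= (x - a) ^ n * A).
      { apply H3. intros t Ht. specialize (HAl t ltac:(lra)). simpl in HAl. auto. }
      assert (HA0 : 0 <= A) by (specialize (HAl a ltac:(lra)); simpl in HAl; eapply Rle_trans; [apply Rabs_pos|apply HAl]).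
      simpl. unfold Rdiv. rewrite Rabs_mult, (Rabs_right (/ INR (fact n))) by (apply Rle_ge; left; apply Rinv_0_lt_compat; auto).
      assert (Hp : (x - a) ^ n <= (b - a) ^ n) by (apply pow_incr; lra).
      assert (0 < / INR (fact n)) by (apply Rinv_0_lt_compat; auto).
      assert (Rabs I <= (b - a) ^ n * A) by (eapply Rle_trans; [apply Hb| apply Rmult_le_compat_r; auto]).
      replace ((b - a) ^ n * / INR (fact n) * A) with ((b - a) ^ n * A * / INR (fact n)) by ring.
      apply Rmult_le_compat_r; lra.
    + rewrite Rbar_mult_pos_p by auto. destruct (Lub_Rbar _); simpl; auto.
    + specialize (HAl a ltac:(lra)). simpl in HAl. contradiction.
Qed.
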